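(* Let $r_1,r_2\in\mathbb{R}$, $A=(a_{ij})_{i,j=1,2}$ with $a_{ij}>0$, $A$ invertible, $(b_1,b_2)^T=A^{-1}(r_1,r_2)^T$ with $b_1,b_2>0$; assume $\langle Ax,x\rangle>0$ for all $x\in\mathbb{R}^2\setminus\{0\}$ and that $\begin{pmatrix}b_1a_{11}&b_1a_{12}\\ b_2a_{21}&b_2a_{22}\end{pmatrix}$ has two real eigenvalues $\mu_1,\mu_2>0$. Let $\tau>0$ with $\min\{2\pi/\mu_1,2\pi/\mu_2\}<\tau$ and suppose there are $n_1\neq n_2$ in $\mathbb{N}\cup\{0\}$ with $\frac{\pi}{2}+2n_i\pi<\mu_i\tau<\frac{\pi}{2}+2(n_i+1)\pi$ for $i=1,2$. Consider $$\dot x_1(t)=-\lambda\big(a_{11}x_1(t-\tau/\lambda)+a_{12}x_2(t-\tau/\lambda)\big)(b_1+x_1(t)),$$ $$\dot x_2(t)=-\lambda\big(a_{21}x_1(t-\tau/\lambda)+a_{22}x_2(t-\tau/\lambda)\big)(b_2+x_2(t)).\qquad(\mathrm{P})$$ Let $\lambda_1,\lambda_2\in\mathbb{R}^+$ with $\lambda_1<\lambda_2$. Then the origin is an isolated solution of (P): there exists $m_1>0$ such that if $((x_1,x_2),\lambda)\in\Theta_0\times[\lambda_1,\lambda_2]$ is a nontrivial solution of (P), then $(x_1,x_2)\notin\{(x_1,x_2)\in\Theta_0:\|x_1\|\le m_1,\ \|x_2\|\le m_1\}$.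
   Context: $\hat E$ denotes the Banach space of functions $x\in C([0,2\pi],\mathbb{R})$ with $\int_0^{2\pi}\dot x(t)^2\,dt<\infty$, $x(0)=x(2\pi)$ and $\int_0^{2\pi}x(t)\,dt=0$, with norm $\|x\|^2=\int_0^{2\pi}(\dot x(t)^2+x(t)^2)\,dt$; such functions are identified with their $2\pi$-periodic extensions to $\mathbb{R}$. $E=\hat E\times\hat E$ and $\Theta_0=\{(x_1,x_2)\in E: x_i(t)>-b_i\text{ for }t\in[0,2\pi],\ i=1,2\}$. A solution $((x_1,x_2),\lambda)$ of (P) is a pair $(x_1,x_2)\in E$ and $\lambda>0$ satisfying (P) for all $t$; nontrivial means $(x_1,x_2)\not\equiv 0$. *)

(* Defs.v *)
From Stdlib Require Import Reals.
From Coquelicot Require Import Coquelicot.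
Open Scope R_scope.

(* Membership in \hat E (for functions identified with their 2pi-periodic
   extensions to R).  The derivative used is Coquelicot's Derive. *)
Definition in_Ehat (x : R -> R) : Prop :=
  (forall t, continuous x t) /\
  (forall t, x (t + 2 * PI) = x t) /\
  ex_RInt (fun t => (Derive x t) ^ 2) 0 (2 * PI) /\
  RInt x 0 (2 * PI) = 0.

Definition Ehat_norm (x : R -> R) : R :=
  sqrt (RInt (fun t => (Derive x t) ^ 2 + (x t) ^ 2) 0 (2 * PI)).

Definition in_Theta0 (b1 b2 : R) (x1 x2 : R -> R) : Prop :=
  in_Ehat x1 /\ in_Ehat x2 /\
  (forall t, 0 <= t <= 2 * PI -> x1 t > - b1) /\
  (forall t, 0 <= t <= 2 * PI -> x2 t > - b2).

Definition solves_P (a11 a12 a21 a22 b1 b2 tau lam : R) (x1 x2 : R -> R) : Prop :=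
  forall t,
    is_derive x1 t
      (- lam * (a11 * x1 (t - tau / lam) + a12 * x2 (t - tau / lam)) * (b1 + x1 t)) /\
    is_derive x2 t
      (- lam * (a21 * x1 (t - tau / lam) + a22 * x2 (t - tau / lam)) * (b2 + x2 t)).

Definition is_eigenvalue2 (m11 m12 m21 m22 mu : R) : Prop :=
  exists v1 v2 : R, (v1 <> 0 \/ v2 <> 0) /\
    m11 * v1 + m12 * v2 = mu * v1 /\ m21 * v1 + m22 * v2 = mu * v2.

(* Main.v *)
Require Import Defs.
From Stdlib Require Import Reals Lra Lia Psatz ZArith FunctionalExtensionality.
From Coquelicot Require Import Coquelicot.
Open Scope R_scope.

Definition RI (f : R -> R) (a b : R) : R := RInt f a b.

Definition C0 (f : R -> R) := forall t, continuous f t.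
Definition Per (f : R -> R) := forall t, f (t + 2 * PI) = f t.

Lemma C0_const c : C0 (fun _ => c).
Proof. intro t; apply continuous_const. Qed.
Lemma C0_id : C0 (fun t => t).
Proof. intro t; apply continuous_id. Qed.
Lemma C0_plus f g : C0 f -> C0 g -> C0 (fun t => f t + g t).
Proof. intros Hf Hg t; apply (continuous_plus f g); auto. Qed.
Lemma C0_mult f g : C0 f -> C0 g -> C0 (fun t => f t * g t).
Proof. intros Hf Hg t; apply (continuous_mult f g); auto. Qed.
Lemma C0_opp f : C0 f -> C0 (fun t => - f t).
Proof. intros Hf. apply (C0_mult (fun _ => -1) f) in Hf; [|apply C0_const].
  intro t. eapply continuous_ext; [|apply Hf]. intros; simpl; ring. Qed.
Lemma C0_minus f g : C0 f -> C0 g -> C0 (fun t => f t - g t).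
Proof. intros; apply C0_plus; auto; apply C0_opp; auto. Qed.
Lemma C0_comp f g : C0 f -> C0 g -> C0 (fun t => g (f t)).
Proof. intros Hf Hg t; apply (continuous_comp f g); auto. Qed.
Lemma C0_cos : C0 cos.
Proof. intro; apply continuous_cos. Qed.
Lemma C0_sin : C0 sin.
Proof. intro; apply continuous_sin. Qed.
Lemma C0_abs : C0 Rabs.
Proof. intro; apply continuous_Rabs. Qed.
Lemma C0_lin f a b : C0 f -> C0 (fun t => f (a * t + b)).
Proof. intros Hf. apply (C0_comp (fun t => a * t + b)); auto.
  apply C0_plus; [apply C0_mult|]; auto using C0_const, C0_id. Qed.
Lemma C0_cosk r : C0 (fun t => cos (r * t)).
Proof. apply (C0_comp (fun t => r * t) cos); [apply C0_mult; auto using C0_const, C0_id|apply C0_cos]. Qed.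
Lemma C0_sink r : C0 (fun t => sin (r * t)).
Proof. apply (C0_comp (fun t => r * t) sin); [apply C0_mult; auto using C0_const, C0_id|apply C0_sin]. Qed.
Lemma C0_pow f n : C0 f -> C0 (fun t => f t ^ n).
Proof. intros Hf; induction n; simpl. apply C0_const. apply C0_mult; auto. Qed.

Lemma ex_C0 f a b : C0 f -> ex_RInt f a b.
Proof. intros Hf; apply (ex_RInt_continuous (V:=R_CompleteNormedModule)); intros; apply Hf. Qed.

Lemma RInt_plus' f g a b : C0 f -> C0 g ->
  RI (fun t => f t + g t) a b = RI f a b + RI g a b.
Proof. unfold RI. intros; apply (RInt_plus f g); apply ex_C0; auto. Qed.
Lemma RInt_scal' f c a b : C0 f -> RI (fun t => c * f t) a b = c * RI f a b.
Proof. unfold RI. intros; apply (RInt_scal f a b c); apply ex_C0; auto. Qed.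
Lemma RInt_minus' f g a b : C0 f -> C0 g ->
  RI (fun t => f t - g t) a b = RI f a b - RI g a b.
Proof. unfold RI. intros; apply (RInt_minus f g); apply ex_C0; auto. Qed.
Lemma RInt_const' (c a b : R) : RI (fun _ => c) a b = (b - a) * c.
Proof. unfold RI. rewrite RInt_const; reflexivity. Qed.
Lemma RInt_swap' f a b : C0 f -> RI f b a = - RI f a b.
Proof. unfold RI. intros; rewrite <- (opp_RInt_swap f a b); [reflexivity|apply ex_C0; auto]. Qed.
Lemma RInt_Chasles' f a b c : C0 f -> RI f a b + RI f b c = RI f a c.
Proof. unfold RI. intros; apply (RInt_Chasles f); apply ex_C0; auto. Qed.
Lemma RInt_ext' f g a b : (forall t, f t = g t) -> RI f a b = RI g a b.
Proof. unfold RI. intros; apply RInt_ext; auto. Qed.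

Lemma RInt_lin f u v a b : C0 f -> u <> 0 ->
  RI (fun y => f (u * y + v)) a b = / u * RI f (u * a + v) (u * b + v).
Proof. intros Hf Hu.
  transitivity (/ u * RI (fun y => u * f (u * y + v)) a b).
  { rewrite RInt_scal'. field; auto. apply C0_lin with (f := f); auto. }
  f_equal. unfold RI. rewrite <- RInt_comp_lin by (apply ex_C0; auto). reflexivity. Qed.

Lemma RInt_transl f c a b : C0 f -> RI (fun y => f (y + c)) a b = RI f (a + c) (b + c).
Proof. intros Hf. rewrite (RInt_ext' _ (fun y => f (1 * y + c))) by (intro; f_equal; ring).
  rewrite RInt_lin by (auto; lra). replace (1 * a + c) with (a + c) by ring.
  replace (1 * b + c) with (b + c) by ring. field. Qed.

Lemma RInt_per f a : C0 f -> Per f -> RI f a (a + 2 * PI) = RI f 0 (2 * PI).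
Proof. intros Hf Hp.
  rewrite <- (RInt_Chasles' f a (2 * PI) (a + 2 * PI)) by auto.
  assert (RI f (2 * PI) (a + 2 * PI) = RI f 0 a).
  { transitivity (RI (fun y => f (y + 2 * PI)) 0 a).
    rewrite RInt_transl by auto. f_equal; ring. apply RInt_ext'; intro; apply Hp. }
  rewrite H. rewrite Rplus_comm. apply RInt_Chasles'; auto. Qed.

Lemma RInt_per_shift f c : C0 f -> Per f -> RI (fun t => f (t + c)) 0 (2 * PI) = RI f 0 (2 * PI).
Proof. intros. rewrite RInt_transl by auto. replace (2 * PI + c) with (c + 2 * PI) by ring.
  replace (0 + c) with c by ring. apply RInt_per; auto. Qed.

Lemma RInt_reflect f t : C0 f -> Per f -> RI (fun v => f (t - v)) 0 (2 * PI) = RI f 0 (2 * PI).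
Proof. intros Hf Hp.
  rewrite (RInt_ext' _ (fun v => f (-1 * v + t))) by (intro; f_equal; ring).
  rewrite RInt_lin by (auto; lra).
  rewrite RInt_swap' by auto.
  replace (-1 * (2 * PI) + t) with ((t - 2 * PI)) by ring.
  replace (-1 * 0 + t) with ((t - 2 * PI) + 2 * PI) by ring.
  rewrite RInt_per by auto. field. Qed.

Lemma Per_C0_comp_ok : True. Proof. exact I. Qed.

Lemma RI_FTC f df a b : (forall x, is_derive f x (df x)) -> C0 df -> RI df a b = f b - f a.
Proof. intros Hd Hc. unfold RI. apply is_RInt_unique.
  apply (is_RInt_derive (V:=R_CompleteNormedModule) f df a b); intros; auto. Qed.

Lemma sin_2PI_n n : sin (INR n * (2 * PI)) = 0.
Proof. apply sin_eq_0_1. exists (2 * Z.of_nat n)%Z. rewrite mult_IZR, <- INR_IZR_INZ. simpl; ring. Qed.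
Lemma cos_2PI_n n : cos (INR n * (2 * PI)) = 1.
Proof. rewrite <- cos_0. rewrite <- (cos_period 0 n). f_equal; ring. Qed.

Lemma Icos n : RI (fun t => cos (INR n * t)) 0 (2 * PI) = if Nat.eq_dec n 0 then 2 * PI else 0.
Proof. destruct (Nat.eq_dec n 0) as [->|Hn].
  - rewrite (RInt_ext' _ (fun _ => 1)). rewrite RInt_const'; ring. intro; simpl; rewrite Rmult_0_l; apply cos_0.
  - assert (HN : INR n <> 0) by (apply not_0_INR; auto).
    rewrite (RI_FTC (fun t => sin (INR n * t) / INR n)).
    + rewrite sin_2PI_n, Rmult_0_r, sin_0. field; auto.
    + intro x. auto_derive; auto. field; auto.
    + apply C0_cosk. Qed.

Lemma Isin n : RI (fun t => sin (INR n * t)) 0 (2 * PI) = 0.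
Proof. destruct (Nat.eq_dec n 0) as [->|Hn].
  - rewrite (RInt_ext' _ (fun _ => 0)). rewrite RInt_const'; ring. intro; simpl; rewrite Rmult_0_l; apply sin_0.
  - assert (HN : INR n <> 0) by (apply not_0_INR; auto).
    rewrite (RI_FTC (fun t => - cos (INR n * t) / INR n)).
    + rewrite cos_2PI_n, Rmult_0_r, cos_0. field; auto.
    + intro x. auto_derive; auto. field; auto.
    + apply C0_sink. Qed.

Lemma Icos_diff j k : RI (fun t => cos ((INR j - INR k) * t)) 0 (2 * PI) = if Nat.eq_dec j k then 2 * PI else 0.
Proof. destruct (Compare_dec.le_lt_dec k j) as [H|H].
  - rewrite (RInt_ext' _ (fun t => cos (INR (j - k) * t))) by (intro; rewrite minus_INR; auto).
    rewrite Icos. destruct (Nat.eq_dec (j-k) 0), (Nat.eq_dec j k); auto; lia.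
  - rewrite (RInt_ext' _ (fun t => cos (INR (k - j) * t))).
    rewrite Icos. destruct (Nat.eq_dec (k-j) 0), (Nat.eq_dec j k); auto; lia.
    intro; rewrite minus_INR by lia. rewrite <- cos_neg. f_equal; ring. Qed.

Lemma Isin_diff j k : RI (fun t => sin ((INR j - INR k) * t)) 0 (2 * PI) = 0.
Proof. destruct (Compare_dec.le_lt_dec k j) as [H|H].
  - rewrite (RInt_ext' _ (fun t => sin (INR (j - k) * t))) by (intro; rewrite minus_INR; auto).
    apply Isin.
  - rewrite (RInt_ext' _ (fun t => -1 * sin (INR (k - j) * t))).
    rewrite RInt_scal' by apply C0_sink. rewrite Isin; ring.
    intro; rewrite minus_INR by lia. rewrite <- (Ropp_involutive ((INR j - INR k) * t)), sin_neg.
    replace (- ((INR j - INR k) * t)) with ((INR k - INR j) * t) by ring. ring. Qed.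

Definition nc (k : nat) := match k with O => 2 * PI | S _ => PI end.
Definition ns (k : nat) := match k with O => 0 | S _ => PI end.

Lemma Icc j k : RI (fun t => cos (INR j * t) * cos (INR k * t)) 0 (2 * PI) =
  if Nat.eq_dec j k then nc k else 0.
Proof.
  rewrite (RInt_ext' _ (fun t => / 2 * (cos ((INR j - INR k) * t) + cos ((INR (j + k)) * t)))).
  2:{ intro t. rewrite plus_INR. replace ((INR j - INR k) * t) with (INR j * t - INR k * t) by ring.
      replace ((INR j + INR k) * t) with (INR j * t + INR k * t) by ring.
      rewrite cos_minus, cos_plus. field. }
  rewrite RInt_scal', RInt_plus', Icos_diff, Icos.
  2,3: apply C0_cosk. 2: apply C0_plus; apply C0_cosk.
  destruct (Nat.eq_dec j k) as [e|ne]; [subst k; destruct (Nat.eq_dec (j+j) 0); destruct j; simpl; try lia; field | destruct (Nat.eq_dec (j+k) 0); [lia|field]]. Qed.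

Lemma Iss j k : RI (fun t => sin (INR j * t) * sin (INR k * t)) 0 (2 * PI) =
  if Nat.eq_dec j k then ns k else 0.
Proof.
  rewrite (RInt_ext' _ (fun t => / 2 * (cos ((INR j - INR k) * t) - cos ((INR (j + k)) * t)))).
  2:{ intro t. rewrite plus_INR. replace ((INR j - INR k) * t) with (INR j * t - INR k * t) by ring.
      replace ((INR j + INR k) * t) with (INR j * t + INR k * t) by ring.
      rewrite cos_minus, cos_plus. field. }
  rewrite RInt_scal', RInt_minus', Icos_diff, Icos.
  2,3: apply C0_cosk. 2: apply C0_minus; apply C0_cosk.
  destruct (Nat.eq_dec j k) as [e|ne]; [subst k; destruct (Nat.eq_dec (j+j) 0); destruct j; simpl; try lia; field | destruct (Nat.eq_dec (j+k) 0); [lia|field]]. Qed.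

Lemma Ics j k : RI (fun t => cos (INR j * t) * sin (INR k * t)) 0 (2 * PI) = 0.
Proof.
  rewrite (RInt_ext' _ (fun t => / 2 * (sin ((INR k - INR j) * t) + sin ((INR (k + j)) * t)))).
  2:{ intro t. rewrite plus_INR. replace ((INR k - INR j) * t) with (INR k * t - INR j * t) by ring.
      replace ((INR k + INR j) * t) with (INR k * t + INR j * t) by ring.
      rewrite sin_minus, sin_plus. field. }
  rewrite RInt_scal', RInt_plus', Isin_diff, Isin. ring.
  1,2: apply C0_sink. apply C0_plus; apply C0_sink. Qed.

Definition Ak (k : nat) (g : R -> R) := RI (fun t => g t * cos (INR k * t)) 0 (2 * PI).
Definition Bk (k : nat) (g : R -> R) := RI (fun t => g t * sin (INR k * t)) 0 (2 * PI).
Definition PN (N : nat) (g : R -> R) := sum_f_R0 (fun k => (Ak k g ^ 2 + Bk k g ^ 2) / nc k) N.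
Definition Tsum (N : nat) (al be : nat -> R) (t : R) :=
  sum_f_R0 (fun k => al k * cos (INR k * t) + be k * sin (INR k * t)) N.

Lemma C0_sum (F : nat -> R -> R) N : (forall k, C0 (F k)) -> C0 (fun t => sum_f_R0 (fun k => F k t) N).
Proof. intros H; induction N; simpl. auto. apply C0_plus; auto. Qed.

Lemma RI_sum (F : nat -> R -> R) N a b : (forall k, C0 (F k)) ->
  RI (fun t => sum_f_R0 (fun k => F k t) N) a b = sum_f_R0 (fun k => RI (F k) a b) N.
Proof. intros H; induction N; simpl. reflexivity.
  rewrite RInt_plus'; auto. rewrite IHN; auto. apply C0_sum; auto. Qed.

Lemma sum_kron (c : nat -> R) j N : (j <= N)%nat ->
  sum_f_R0 (fun k => if Nat.eq_dec k j then c k else 0) N = c j.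
Proof. intros H; induction N.
  - assert (j = 0%nat) by lia; subst; reflexivity.
  - rewrite tech5. destruct (Nat.eq_dec (S N) j) as [e|ne].
    + subst. rewrite sum_eq_R0. ring. intros k Hk. destruct (Nat.eq_dec k (S N)); auto; lia.
    + rewrite IHN by lia. ring. Qed.

Lemma C0_Tsum N al be : C0 (Tsum N al be).
Proof. unfold Tsum. apply (C0_sum (fun k t => al k * cos (INR k * t) + be k * sin (INR k * t))).
  intro k; apply C0_plus; apply C0_mult; auto using C0_const, C0_cosk, C0_sink. Qed.

Lemma B0 g : Bk 0 g = 0.
Proof. unfold Bk. rewrite (RInt_ext' _ (fun _ => 0)). rewrite RInt_const'; ring.
  intro; simpl; rewrite Rmult_0_l, sin_0; ring. Qed.

Lemma C0_gc g r : C0 g -> C0 (fun t => g t * cos (r * t)).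
Proof. intros; apply C0_mult; auto using C0_cosk. Qed.
Lemma C0_gs g r : C0 g -> C0 (fun t => g t * sin (r * t)).
Proof. intros; apply C0_mult; auto using C0_sink. Qed.
Lemma C0_scal c g : C0 g -> C0 (fun t => c * g t).
Proof. intros; apply C0_mult; auto using C0_const. Qed.

Lemma RI_gT g N al be : C0 g ->
  RI (fun t => g t * Tsum N al be t) 0 (2 * PI) = sum_f_R0 (fun k => al k * Ak k g + be k * Bk k g) N.
Proof. intros Hg. unfold Tsum.
  rewrite (RInt_ext' _ (fun t => sum_f_R0 (fun k => al k * (g t * cos (INR k * t)) + be k * (g t * sin (INR k * t))) N)).
  2:{ intro t. rewrite scal_sum. apply sum_eq. intros; ring. }
  rewrite RI_sum. apply sum_eq. intros k _. unfold Ak, Bk.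
  rewrite RInt_plus', !RInt_scal'; auto using C0_gc, C0_gs, C0_scal.
  intro k; apply C0_plus; auto using C0_gc, C0_gs, C0_scal. Qed.

Lemma Ak_T j N al be : (j <= N)%nat -> Ak j (Tsum N al be) = al j * nc j.
Proof. intros H. unfold Ak.
  rewrite (RInt_ext' _ (fun t => cos (INR j * t) * Tsum N al be t)) by (intro; ring).
  rewrite RI_gT by apply C0_cosk.
  rewrite (sum_eq _ (fun k => if Nat.eq_dec k j then al k * nc k else 0)).
  apply sum_kron; auto.
  intros k _. unfold Ak, Bk. rewrite Icc, Ics.
  destruct (Nat.eq_dec j k), (Nat.eq_dec k j); subst; try lia; ring. Qed.

Lemma Bk_T j N al be : (j <= N)%nat -> Bk j (Tsum N al be) = be j * ns j.
Proof. intros H. unfold Bk.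
  rewrite (RInt_ext' _ (fun t => sin (INR j * t) * Tsum N al be t)) by (intro; ring).
  rewrite RI_gT by apply C0_sink.
  rewrite (sum_eq _ (fun k => if Nat.eq_dec k j then be k * ns k else 0)).
  apply sum_kron; auto.
  intros k _. unfold Ak, Bk. rewrite Iss.
  rewrite (RInt_ext' _ (fun t => cos (INR k * t) * sin (INR j * t))) by (intro; ring).
  rewrite Ics.
  destruct (Nat.eq_dec j k), (Nat.eq_dec k j); subst; try lia; ring. Qed.

Lemma RI_TT N al be : RI (fun t => Tsum N al be t * Tsum N al be t) 0 (2 * PI) =
  sum_f_R0 (fun k => al k ^ 2 * nc k + be k ^ 2 * ns k) N.
Proof. rewrite RI_gT by apply C0_Tsum. apply sum_eq. intros k Hk.
  rewrite Ak_T, Bk_T by lia. ring. Qed.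

Lemma RI_sq_diff g N al be : C0 g ->
  RI (fun t => (g t - Tsum N al be t) ^ 2) 0 (2 * PI) =
  RI (fun t => g t ^ 2) 0 (2 * PI) +
  sum_f_R0 (fun k => al k ^ 2 * nc k + be k ^ 2 * ns k - 2 * (al k * Ak k g) - 2 * (be k * Bk k g)) N.
Proof. intros Hg. pose proof (C0_Tsum N al be) as HT.
  rewrite (RInt_ext' _ (fun t => g t ^ 2 - 2 * (g t * Tsum N al be t) + Tsum N al be t * Tsum N al be t)) by (intro; ring).
  rewrite RInt_plus', RInt_minus', RInt_scal', RI_gT, RI_TT; auto.
  2: apply C0_mult; auto. 2: apply C0_pow; auto. 2: apply C0_scal; apply C0_mult; auto.
  2: apply C0_minus; [apply C0_pow; auto|apply C0_scal; apply C0_mult; auto]. 2: apply C0_mult; auto.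
  unfold Rminus. rewrite Rplus_assoc. f_equal.
  clear. induction N. simpl; ring. rewrite !tech5, <- IHN; ring. Qed.

Lemma nc_pos k : 0 < nc k.
Proof. destruct k; simpl; pose proof PI_RGT_0; lra. Qed.

Lemma sq_aux A a c : 0 < c -> - (A ^ 2 / c) <= a ^ 2 * c - 2 * (a * A).
Proof. intros Hc. assert (0 <= (a * c - A) ^ 2 / c).
  { apply Rmult_le_pos. apply pow2_ge_0. left; apply Rinv_0_lt_compat; auto. }
  replace ((a * c - A) ^ 2 / c) with (a ^ 2 * c - 2 * (a * A) + A ^ 2 / c) in H by (field; lra). lra. Qed.

Lemma best_approx g N al be : C0 g ->
  RI (fun t => g t ^ 2) 0 (2 * PI) - PN N g <= RI (fun t => (g t - Tsum N al be t) ^ 2) 0 (2 * PI).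
Proof. intros Hg. rewrite RI_sq_diff by auto. unfold PN.
  unfold Rminus. apply Rplus_le_compat_l. rewrite <- (Rmult_1_l (sum_f_R0 _ N)), Ropp_mult_distr_l, scal_sum.
  apply sum_Rle. intros k _. pose proof (nc_pos k). pose proof PI_RGT_0.
  pose proof (sq_aux (Ak k g) (al k) (nc k) H) as H1.
  destruct k.
  - rewrite B0. simpl nc; simpl ns. simpl nc in H1.
    replace ((Ak 0 g ^ 2 + 0 ^ 2) / (2 * PI) * -1) with (- (Ak 0 g ^ 2 / (2 * PI))) by (field; lra).
    replace (be 0%nat ^ 2 * 0 + - (2 * (be 0%nat * 0))) with 0 by ring. lra.
  - simpl nc; simpl ns. simpl nc in H1.
    pose proof (sq_aux (Bk (S k) g) (be (S k)) PI H0) as H2.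
    replace ((Ak (S k) g ^ 2 + Bk (S k) g ^ 2) / PI * -1) with (- (Ak (S k) g ^ 2 / PI) + - (Bk (S k) g ^ 2 / PI)) by (field; lra).
    lra. Qed.

Lemma RI_sq_ge0 g : C0 g -> 0 <= RI (fun t => g t ^ 2) 0 (2 * PI).
Proof. intros Hg. unfold RI. apply RInt_ge_0. pose proof PI_RGT_0; lra.
  apply ex_C0, C0_pow; auto. intros; apply pow2_ge_0. Qed.

Lemma bessel g N : C0 g -> PN N g <= RI (fun t => g t ^ 2) 0 (2 * PI).
Proof. intros Hg.
  pose proof (RI_sq_ge0 _ (C0_minus g (Tsum N (fun k => Ak k g / nc k) (fun k => Bk k g / nc k)) Hg (C0_Tsum _ _ _))) as H0.
  cbv beta in H0. rewrite RI_sq_diff in H0 by auto.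
  cut (sum_f_R0 (fun k => (Ak k g / nc k) ^ 2 * nc k + (Bk k g / nc k) ^ 2 * ns k -
      2 * (Ak k g / nc k * Ak k g) - 2 * (Bk k g / nc k * Bk k g)) N = - PN N g). intros E; lra.
  unfold PN. rewrite <- (Rmult_1_l (sum_f_R0 (fun k => (Ak k g ^ 2 + Bk k g ^ 2) / nc k) N)), Ropp_mult_distr_l, scal_sum. apply sum_eq. intros k _.
  pose proof PI_RGT_0. destruct k.
  - rewrite B0. simpl. field. lra.
  - simpl. field. lra. Qed.

Lemma sin_lip a b : Rabs (sin a - sin b) <= Rabs (a - b).
Proof. destruct (MVT_gen sin b a cos) as [c [_ Hc]].
  - intros; apply is_derive_sin.
  - intros; apply continuity_sin.
  - rewrite Hc, Rabs_mult. pose proof (COS_bound c).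
    rewrite <- (Rmult_1_l (Rabs (a - b))) at 2. apply Rmult_le_compat_r. apply Rabs_pos.
    apply Rabs_le; lra. Qed.

Lemma cos_perk k t c : cos (INR k * (t + 2 * PI) + c) = cos (INR k * t + c).
Proof. rewrite <- (cos_period (INR k * t + c) k). f_equal; ring. Qed.
Lemma sin_perk k t c : sin (INR k * (t + 2 * PI) + c) = sin (INR k * t + c).
Proof. rewrite <- (sin_period (INR k * t + c) k). f_equal; ring. Qed.

Lemma is_derive_prod f g x a b : is_derive f x a -> is_derive g x b ->
  is_derive (fun t => f t * g t) x (a * g x + f x * b).
Proof. intros Ha Hb. apply (is_derive_mult (K:=R_AbsRing) f g x a b Ha Hb).
  intros; apply Rmult_comm. Qed.
Lemma is_derive_cosk r x : is_derive (fun t => cos (r * t)) x (- (r * sin (r * x))).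
Proof. auto_derive; auto. ring. Qed.
Lemma is_derive_sink r x : is_derive (fun t => sin (r * t)) x (r * cos (r * x)).
Proof. auto_derive; auto. ring. Qed.

Section Coef.
Variables (z dz : R -> R).
Hypothesis Hd : forall x, is_derive z x (dz x).
Hypothesis Hdc : C0 dz.
Hypothesis Hp : Per z.

Lemma C0_z : C0 z.
Proof. intro t. apply (ex_derive_continuous (K:=R_AbsRing) (V:=R_NormedModule)). eexists; apply Hd. Qed.

Lemma z2PI : z (2 * PI) = z 0.
Proof. rewrite <- (Hp 0). f_equal; ring. Qed.

Lemma Ak_deriv k : Ak k dz = INR k * Bk k z.
Proof. unfold Ak, Bk.
  assert (E : RI (fun t => dz t * cos (INR k * t) - INR k * (z t * sin (INR k * t))) 0 (2 * PI) = 0).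
  { rewrite (RI_FTC (fun t => z t * cos (INR k * t))).
    - rewrite z2PI. rewrite cos_2PI_n, Rmult_0_r, cos_0. ring.
    - intro x. replace (dz x * cos (INR k * x) - INR k * (z x * sin (INR k * x))) with
        (dz x * cos (INR k * x) + z x * (- (INR k * sin (INR k * x)))) by ring.
      apply (is_derive_prod z (fun t => cos (INR k * t))). apply Hd. apply is_derive_cosk.
    - apply C0_minus. apply C0_gc; auto. apply C0_scal, C0_gs, C0_z. }
  rewrite RInt_minus', RInt_scal' in E. lra.
  apply C0_gs, C0_z. apply C0_gc; auto. apply C0_scal, C0_gs, C0_z. Qed.
Lemma Bk_deriv k : Bk k dz = - (INR k * Ak k z).
Proof. unfold Ak, Bk.
  assert (E : RI (fun t => dz t * sin (INR k * t) + INR k * (z t * cos (INR k * t))) 0 (2 * PI) = 0).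
  { rewrite (RI_FTC (fun t => z t * sin (INR k * t))).
    - rewrite z2PI. rewrite sin_2PI_n, (Rmult_0_r (INR k)), sin_0. ring.
    - intro x. replace (dz x * sin (INR k * x) + INR k * (z x * cos (INR k * x))) with
        (dz x * sin (INR k * x) + z x * (INR k * cos (INR k * x))) by ring.
      apply (is_derive_prod z (fun t => sin (INR k * t))). apply Hd. apply is_derive_sink.
    - apply C0_plus. apply C0_gs; auto. apply C0_scal, C0_gc, C0_z. }
  rewrite RInt_plus', RInt_scal' in E. lra.
  apply C0_gc, C0_z. apply C0_gs; auto. apply C0_scal, C0_gc, C0_z. Qed.

Lemma Ak_shift k s : Ak k (fun t => z (t - s)) = cos (INR k * s) * Ak k z - sin (INR k * s) * Bk k z.
Proof. unfold Ak, Bk.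
  pose (h := fun u => z u * cos (INR k * u + INR k * s)).
  assert (Ch : C0 h). { unfold h. apply C0_mult. apply C0_z.
    apply (C0_comp (fun u => INR k * u + INR k * s) cos); [apply C0_plus; [apply C0_mult|]; auto using C0_const, C0_id|apply C0_cos]. }
  assert (Ph : Per h). { intro t; unfold h. rewrite Hp, cos_perk. reflexivity. }
  transitivity (RI (fun t => h (t + - s)) 0 (2 * PI)).
  { apply RInt_ext'. intro t. unfold h. f_equal. f_equal. ring. }
  rewrite RInt_per_shift by auto. unfold h.
  rewrite (RInt_ext' _ (fun u => cos (INR k * s) * (z u * cos (INR k * u)) - sin (INR k * s) * (z u * sin (INR k * u)))).
  assert (C1 : C0 (fun u => z u * cos (INR k * u))) by (apply C0_gc, C0_z).
  assert (C2 : C0 (fun u => z u * sin (INR k * u))) by (apply C0_gs, C0_z).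
  rewrite RInt_minus' by (apply C0_scal; auto). rewrite !RInt_scal' by auto. reflexivity.
  intro u. rewrite cos_plus. ring. Qed.

Lemma Bk_shift k s : Bk k (fun t => z (t - s)) = sin (INR k * s) * Ak k z + cos (INR k * s) * Bk k z.
Proof. unfold Ak, Bk.
  pose (h := fun u => z u * sin (INR k * u + INR k * s)).
  assert (Ch : C0 h). { unfold h. apply C0_mult. apply C0_z.
    apply (C0_comp (fun u => INR k * u + INR k * s) sin); [apply C0_plus; [apply C0_mult|]; auto using C0_const, C0_id|apply C0_sin]. }
  assert (Ph : Per h). { intro t; unfold h. rewrite Hp, sin_perk. reflexivity. }
  transitivity (RI (fun t => h (t + - s)) 0 (2 * PI)).
  { apply RInt_ext'. intro t. unfold h. f_equal. f_equal. ring. }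
  rewrite RInt_per_shift by auto. unfold h.
  rewrite (RInt_ext' _ (fun u => sin (INR k * s) * (z u * cos (INR k * u)) + cos (INR k * s) * (z u * sin (INR k * u)))).
  assert (C1 : C0 (fun u => z u * cos (INR k * u))) by (apply C0_gc, C0_z).
  assert (C2 : C0 (fun u => z u * sin (INR k * u))) by (apply C0_gs, C0_z).
  rewrite RInt_plus' by (apply C0_scal; auto). rewrite !RInt_scal' by auto. reflexivity.
  intro u. rewrite sin_plus. ring. Qed.

Definition phi (k : nat) (c s : R) := INR k ^ 2 - 2 * INR k * c * sin (INR k * s) + c ^ 2.

Lemma coef_f k c s :
  let f := fun t => dz t + c * z (t - s) in
  Ak k f ^ 2 + Bk k f ^ 2 = phi k c s * (Ak k z ^ 2 + Bk k z ^ 2).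
Proof. intros f.
  assert (Cs : C0 (fun t => z (t - s))).
  { apply (C0_comp (fun t => t - s) z). apply C0_minus; auto using C0_id, C0_const. apply C0_z. }
  assert (EA : Ak k f = Ak k dz + c * Ak k (fun t => z (t - s))).
  { unfold Ak, f. rewrite <- RInt_scal', <- RInt_plus'. apply RInt_ext'; intro; ring.
    apply C0_gc; auto. apply C0_scal, C0_gc; auto. apply C0_gc; auto. }
  assert (EB : Bk k f = Bk k dz + c * Bk k (fun t => z (t - s))).
  { unfold Bk, f. rewrite <- RInt_scal', <- RInt_plus'. apply RInt_ext'; intro; ring.
    apply C0_gs; auto. apply C0_scal, C0_gs; auto. apply C0_gs; auto. }
  rewrite EA, EB, Ak_deriv, Bk_deriv, Ak_shift, Bk_shift. unfold phi.
  pose proof (sin2_cos2 (INR k * s)) as E. unfold Rsqr in E.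
  set (S := sin (INR k * s)) in *. set (C := cos (INR k * s)) in *.
  set (A := Ak k z). set (B := Bk k z).
  replace (c ^ 2) with (c ^ 2 * (S * S + C * C)) by (rewrite E; ring). ring. Qed.

Lemma PN_f N c s d2 : (forall k, d2 <= phi k c s) ->
  d2 * PN N z <= PN N (fun t => dz t + c * z (t - s)).
Proof. intros Hk. unfold PN. rewrite scal_sum. apply sum_Rle. intros k _.
  rewrite coef_f. pose proof (nc_pos k).
  assert (0 <= (Ak k z ^ 2 + Bk k z ^ 2) / nc k).
  { apply Rmult_le_pos. pose proof (pow2_ge_0 (Ak k z)); pose proof (pow2_ge_0 (Bk k z)); lra.
    left; apply Rinv_0_lt_compat; auto. }
  replace (phi k c s * (Ak k z ^ 2 + Bk k z ^ 2) / nc k) with ((Ak k z ^ 2 + Bk k z ^ 2) / nc k * phi k c s) by (unfold Rdiv; ring).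
  apply Rmult_le_compat_l; auto. Qed.
End Coef.

Lemma phi_lb (mu tau l1 l : R) k : 0 < mu -> 0 < tau -> 0 < l1 -> l1 <= l -> sin (mu * tau) < 1 ->
  Rmin ((l1 * mu) ^ 2) (Rmin (((1 - sin (mu * tau)) * l1 / (2 * tau)) ^ 2) (l1 * mu * (1 - sin (mu * tau))))
  <= phi k (l * mu) (tau / l).
Proof. intros Hmu Ht Hl1 Hl Hs. set (eta := 1 - sin (mu * tau)).
  assert (He : 0 < eta) by (unfold eta; lra).
  assert (Hc : l1 * mu <= l * mu) by (apply Rmult_le_compat_r; lra).
  assert (Hc0 : 0 < l1 * mu) by (apply Rmult_lt_0_compat; lra).
  unfold phi. destruct k as [|k].
  - simpl INR. apply Rle_trans with ((l1 * mu) ^ 2). apply Rmin_l.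
    replace (0 ^ 2 - 2 * 0 * (l * mu) * sin (0 * (tau / l)) + (l * mu) ^ 2) with ((l*mu)^2) by ring.
    apply pow_incr; lra.
  - set (K := INR (S k)). assert (HK : 1 <= K) by (unfold K; rewrite S_INR; pose proof (pos_INR k); lra).
    set (c := l * mu). set (s := tau / l). assert (Hcc : 0 < c) by (unfold c; lra). assert (Hc1 : l1 * mu <= c) by (unfold c; lra).
    assert (Hs0 : 0 < s) by (unfold s; apply Rdiv_lt_0_compat; lra).
    assert (E1 : K * s - mu * tau = s * (K - c)) by (unfold s, c; field; lra).
    pose proof (sin_lip (K * s) (mu * tau)) as Hlip. rewrite E1, Rabs_mult, (Rabs_right s) in Hlip by lra.
    pose proof (SIN_bound (K * s)) as Hsb.
    replace (K ^ 2 - 2 * K * c * sin (K * s) + c ^ 2) with ((K - c) ^ 2 + 2 * K * c * (1 - sin (K * s))) by ring.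
    destruct (Rle_lt_dec (s * Rabs (K - c)) (eta / 2)) as [Hd|Hd].
    + apply Rle_trans with (l1 * mu * eta). eapply Rle_trans; [apply Rmin_r|apply Rmin_r].
      assert (1 - sin (K * s) >= eta / 2).
      { pose proof (Rle_abs (sin (K * s) - sin (mu * tau))). unfold eta in *. lra. }
      assert (K * c * eta <= 2 * K * c * (1 - sin (K * s))).
      { assert (0 < K * c) by (apply Rmult_lt_0_compat; lra). assert (0 <= K * c * ((1 - sin (K * s)) - eta / 2)) by (apply Rmult_le_pos; lra). nra. }
      assert (l1 * mu * eta <= K * c * eta).
      { apply Rmult_le_compat_r. lra. replace (l1 * mu) with (1 * (l1 * mu)) by ring. apply Rmult_le_compat; lra. }
      pose proof (pow2_ge_0 (K - c)). lra.
    + apply Rle_trans with ((eta * l1 / (2 * tau)) ^ 2). eapply Rle_trans; [apply Rmin_r|apply Rmin_l].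
      assert (eta * l1 / (2 * tau) <= Rabs (K - c)).
      { apply Rle_trans with (eta / (2 * s)).
        unfold s. unfold Rdiv. rewrite !Rinv_mult, Rinv_inv.
        assert (0 < / tau) by (apply Rinv_0_lt_compat; auto).
        assert (eta * / 2 * / tau * l1 <= eta * / 2 * / tau * l) by (apply Rmult_le_compat_l; [|lra]; 
           apply Rmult_le_pos; [|lra]; apply Rmult_le_pos; lra).
        nra.
        apply Rmult_le_reg_l with (2 * s). lra. replace (2 * s * (eta / (2 * s))) with eta by (field; lra). lra. }
      assert (0 <= 2 * K * c * (1 - sin (K * s))).
      { assert (0 < K * c) by (apply Rmult_lt_0_compat; lra). nra. }
      assert (0 <= eta * l1 / (2 * tau)) by (apply Rmult_le_pos; [nra|left; apply Rinv_0_lt_compat; lra]).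
      assert ((eta * l1 / (2 * tau)) ^ 2 <= (K - c) ^ 2).
      { rewrite <- (pow2_abs (K - c)). apply pow_incr; lra. }
      lra. Qed.

Inductive TP (N : nat) : (R -> R) -> Prop :=
| tpc k : (k <= N)%nat -> TP N (fun t => cos (INR k * t))
| tps k : (k <= N)%nat -> TP N (fun t => sin (INR k * t))
| tpp f g : TP N f -> TP N g -> TP N (fun t => f t + g t)
| tpm a f : TP N f -> TP N (fun t => a * f t).

Lemma TP_ext N f g : TP N f -> (forall t, f t = g t) -> TP N g.
Proof. intros H E. replace g with f; auto. apply functional_extensionality; auto. Qed.

Lemma TP_mono N M f : (N <= M)%nat -> TP N f -> TP M f.
Proof. intros HNM H; induction H. apply tpc; lia. apply tps; lia. apply tpp; auto. apply tpm; auto. Qed.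

Lemma TP_C0 N f : TP N f -> C0 f.
Proof. intros H; induction H. apply C0_cosk. apply C0_sink. apply C0_plus; auto. apply C0_scal; auto. Qed.

Lemma TP_rep N f : TP N f -> exists al be, forall t, f t = Tsum N al be t.
Proof. intros H; induction H.
  - exists (fun j => if Nat.eq_dec j k then 1 else 0), (fun _ => 0). intro t. unfold Tsum.
    rewrite (sum_eq _ (fun j => if Nat.eq_dec j k then cos (INR j * t) else 0)).
    rewrite sum_kron; auto. intros j _. destruct (Nat.eq_dec j k); ring.
  - exists (fun _ => 0), (fun j => if Nat.eq_dec j k then 1 else 0). intro t. unfold Tsum.
    rewrite (sum_eq _ (fun j => if Nat.eq_dec j k then sin (INR j * t) else 0)).
    rewrite sum_kron; auto. intros j _. destruct (Nat.eq_dec j k); ring.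
  - destruct IHTP1 as [a1 [b1 E1]], IHTP2 as [a2 [b2 E2]].
    exists (fun j => a1 j + a2 j), (fun j => b1 j + b2 j). intro t. rewrite E1, E2. unfold Tsum.
    rewrite <- sum_plus. apply sum_eq; intros; ring.
  - destruct IHTP as [a1 [b1 E1]].
    exists (fun j => a * a1 j), (fun j => a * b1 j). intro t. rewrite E1. unfold Tsum.
    rewrite scal_sum. apply sum_eq; intros; ring. Qed.

Lemma TP_mulcos N f : TP N f -> TP (S N) (fun t => cos t * f t).
Proof. intros H; induction H.
  - destruct k as [|k].
    + apply (TP_ext _ (fun t => cos (INR 1 * t))). apply tpc; lia. intro t. simpl INR. rewrite Rmult_0_l, cos_0, Rmult_1_l. ring.
    + apply (TP_ext _ (fun t => / 2 * cos (INR (S (S k)) * t) + / 2 * cos (INR k * t))).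
      apply tpp; apply tpm; apply tpc; lia.
      intro t. rewrite !S_INR.
      replace ((INR k + 1 + 1) * t) with ((INR k + 1) * t + t) by ring.
      replace (INR k * t) with ((INR k + 1) * t - t) by ring.
      rewrite cos_plus, cos_minus. field.
  - destruct k as [|k].
    + apply (TP_ext _ (fun t => 0 * cos (INR 0 * t))). apply tpm; apply tpc; lia. intro t. simpl INR. rewrite !Rmult_0_l, sin_0. ring.
    + apply (TP_ext _ (fun t => / 2 * sin (INR (S (S k)) * t) + / 2 * sin (INR k * t))).
      apply tpp; apply tpm; apply tps; lia.
      intro t. rewrite !S_INR.
      replace ((INR k + 1 + 1) * t) with ((INR k + 1) * t + t) by ring.
      replace (INR k * t) with ((INR k + 1) * t - t) by ring.
      rewrite sin_plus, sin_minus. field.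
  - apply (TP_ext _ (fun t => cos t * f t + cos t * g t)). apply tpp; auto. intro; ring.
  - apply (TP_ext _ (fun t => a * (cos t * f t))). apply tpm; auto. intro; ring. Qed.

Definition Lk (n : nat) (u : R) := ((1 + cos u) / 2) ^ n.

Lemma TP_Lk n : TP n (Lk n).
Proof. induction n.
  - apply (TP_ext _ (fun t => cos (INR 0 * t))). apply tpc; lia. intro t; unfold Lk; simpl. rewrite Rmult_0_l; apply cos_0.
  - apply (TP_ext _ (fun t => / 2 * Lk n t + / 2 * (cos t * Lk n t))).
    apply tpp; apply tpm. apply (TP_mono n); auto. apply TP_mulcos; auto.
    intro t; unfold Lk; simpl. field. Qed.

Lemma C0_refl f t : C0 f -> C0 (fun v => f (t - v)).
Proof. intros; apply (C0_comp (fun v => t - v) f); auto. apply C0_minus; [apply C0_const|apply C0_id]. Qed.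

Ltac c0 := repeat (first [assumption | apply C0_const | apply C0_cosk | apply C0_sink | apply C0_plus | apply C0_minus | apply C0_mult]).

Lemma RInt_scal_r f c a b : C0 f -> RI (fun t => f t * c) a b = RI f a b * c.
Proof. intros. rewrite Rmult_comm, <- RInt_scal' by auto. apply RInt_ext'; intro; ring. Qed.

Lemma TP_conv g N L : C0 g -> TP N L -> TP N (fun t => RI (fun v => g v * L (t - v)) 0 (2 * PI)).
Proof. intros Hg H; induction H.
  - apply (TP_ext _ (fun t => Ak k g * cos (INR k * t) + Bk k g * sin (INR k * t))).
    apply tpp; apply tpm; [apply tpc|apply tps]; auto.
    intro t. unfold Ak, Bk. rewrite <- !RInt_scal_r, <- RInt_plus'.
    apply RInt_ext'. intro v. replace (INR k * (t - v)) with (INR k * t - INR k * v) by ring. rewrite cos_minus. ring.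
    all: c0.
  - apply (TP_ext _ (fun t => Ak k g * sin (INR k * t) + Bk k g * (-1 * cos (INR k * t)))).
    apply tpp; apply tpm; [apply tps|apply tpm; apply tpc]; auto.
    intro t. unfold Ak, Bk. rewrite <- !RInt_scal_r, <- RInt_plus'.
    apply RInt_ext'. intro v. replace (INR k * (t - v)) with (INR k * t - INR k * v) by ring. rewrite sin_minus. ring.
    all: c0.
  - apply (TP_ext _ (fun t => RI (fun v => g v * f (t - v)) 0 (2 * PI) + RI (fun v => g v * g0 (t - v)) 0 (2 * PI))).
    apply tpp; auto.
    intro t. rewrite <- RInt_plus'. apply RInt_ext'; intro; ring.
    all: try (apply C0_mult; auto; apply C0_refl; apply TP_C0 with N; auto).
  - apply (TP_ext _ (fun t => a * RI (fun v => g v * f (t - v)) 0 (2 * PI))).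
    apply tpm; auto.
    intro t. rewrite <- RInt_scal'. apply RInt_ext'; intro; ring.
    all: try (apply C0_mult; auto; apply C0_refl; apply TP_C0 with N; auto). Qed.

Lemma cos_abs u : cos (Rabs u) = cos u.
Proof. destruct (Rcase_abs u). rewrite Rabs_left by auto; apply cos_neg. rewrite Rabs_right; auto. Qed.

Lemma cos_mono a b : 0 <= a -> a <= b -> b <= PI -> cos b <= cos a.
Proof. intros. destruct (Req_dec a b). subst; lra. left; apply cos_decreasing_1; lra. Qed.

Lemma Lk_nonneg n u : 0 <= Lk n u.
Proof. unfold Lk. apply pow_le. pose proof (COS_bound u). lra. Qed.
Lemma C0_Lk n : C0 (Lk n).
Proof. unfold Lk. apply C0_pow. apply C0_mult. apply C0_plus. apply C0_const. apply C0_cos. apply C0_const. Qed.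
Lemma Lk_per n : Per (Lk n).
Proof. intro u. unfold Lk. replace (u + 2 * PI) with (u + 2 * INR 1 * PI) by (simpl; ring). rewrite cos_period; auto. Qed.

Lemma Lk_upper n eta u : 0 < eta -> eta <= Rabs u <= PI -> Lk n u <= ((1 + cos eta) / 2) ^ n.
Proof. intros. unfold Lk. apply pow_incr. pose proof (COS_bound u). rewrite <- (cos_abs u).
  pose proof (cos_mono eta (Rabs u)). rewrite cos_abs in *. lra. Qed.
Lemma Lk_lower n rho u : 0 <= rho <= PI -> Rabs u <= rho -> ((1 + cos rho) / 2) ^ n <= Lk n u.
Proof. intros. unfold Lk. apply pow_incr. pose proof (COS_bound rho).
  pose proof (cos_mono (Rabs u) rho). rewrite cos_abs in *. pose proof (Rabs_pos u). lra. Qed.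

Lemma RI_nonneg f a b : a <= b -> C0 f -> (forall x, 0 <= f x) -> 0 <= RI f a b.
Proof. intros. unfold RI. apply RInt_ge_0; auto. apply ex_C0; auto. Qed.
Lemma RI_le f g a b : a <= b -> C0 f -> C0 g -> (forall x, a <= x <= b -> f x <= g x) -> RI f a b <= RI g a b.
Proof. intros. unfold RI. apply RInt_le; auto; try apply ex_C0; auto. intros; apply H2; lra. Qed.
Lemma RI_abs f a b : a <= b -> C0 f -> Rabs (RI f a b) <= RI (fun t => Rabs (f t)) a b.
Proof. intros. unfold RI. apply abs_RInt_le; auto. apply ex_C0; auto. Qed.

Lemma I_lower n rho : 0 < rho < PI -> 2 * rho * ((1 + cos rho) / 2) ^ n <= RI (Lk n) (- PI) PI.
Proof. intros Hr. pose proof (C0_Lk n).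
  rewrite <- (RInt_Chasles' _ (- PI) rho PI), <- (RInt_Chasles' _ (- PI) (- rho) rho) by auto.
  pose proof (RI_nonneg (Lk n) (- PI) (- rho)). pose proof (RI_nonneg (Lk n) rho PI).
  assert (2 * rho * ((1 + cos rho) / 2) ^ n <= RI (Lk n) (- rho) rho).
  { replace (2 * rho * ((1 + cos rho) / 2) ^ n) with (RI (fun _ => ((1 + cos rho) / 2) ^ n) (- rho) rho)
      by (rewrite RInt_const'; ring).
    apply RI_le; auto. lra. apply C0_const. intros. apply Lk_lower. lra. apply Rabs_le; lra. }
  assert (0 <= RI (Lk n) (- PI) (- rho)) by (apply H0; auto; [lra|apply Lk_nonneg]).
  assert (0 <= RI (Lk n) rho PI) by (apply H1; auto; [lra|apply Lk_nonneg]). lra. Qed.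

Lemma int_uL n eta : 0 < eta -> eta <= PI ->
  RI (fun u => Rabs u * Lk n u) (- PI) PI <= eta * RI (Lk n) (- PI) PI + 2 * PI * (PI * ((1 + cos eta) / 2) ^ n).
Proof. intros. pose proof (C0_Lk n).
  rewrite <- RInt_scal' by auto.
  replace (2 * PI * (PI * ((1 + cos eta) / 2) ^ n)) with (RI (fun _ => PI * ((1 + cos eta) / 2) ^ n) (- PI) PI) by (rewrite RInt_const'; ring).
  rewrite <- RInt_plus'. 2: apply C0_scal; auto. 2: apply C0_const.
  apply RI_le. pose proof PI_RGT_0; lra. apply C0_mult; auto. apply C0_abs. apply C0_plus. apply C0_scal; auto. apply C0_const.
  intros u Hu. pose proof (Lk_nonneg n u). assert (Hq : 0 <= ((1 + cos eta) / 2) ^ n) by (apply pow_le; pose proof (COS_bound eta); lra).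
  destruct (Rle_lt_dec (Rabs u) eta).
  - assert (Rabs u * Lk n u <= eta * Lk n u) by (apply Rmult_le_compat_r; auto).
    assert (0 <= PI * ((1 + cos eta) / 2) ^ n). apply Rmult_le_pos. pose proof PI_RGT_0; lra.
    auto. lra.
  - assert (Lk n u <= ((1 + cos eta) / 2) ^ n). apply Lk_upper; auto. split. lra. apply Rabs_le; lra.
    assert (Rabs u * Lk n u <= PI * ((1 + cos eta) / 2) ^ n).
    apply Rmult_le_compat; auto. apply Rabs_pos. apply Rabs_le; lra.
    assert (0 <= eta * Lk n u) by (apply Rmult_le_pos; lra). lra. Qed.

Lemma approx_bound z Lz n eta t : C0 z -> Per z -> 0 <= Lz ->
  (forall a b, Rabs (z a - z b) <= Lz * Rabs (a - b)) -> 0 < eta -> eta <= PI ->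
  0 < RI (Lk n) (- PI) PI ->
  Rabs (z t - / RI (Lk n) (- PI) PI * RI (fun v => z v * Lk n (t - v)) 0 (2 * PI)) <=
  Lz * eta + Lz * (2 * PI * (PI * ((1 + cos eta) / 2) ^ n)) / RI (Lk n) (- PI) PI.
Proof. intros Cz Pz HL Lip He He2 HI. set (I := RI (Lk n) (- PI) PI) in *.
  pose proof (C0_Lk n) as CL. pose proof PI_RGT_0 as Hpi.
  set (w := fun u => z (t - u) * Lk n u).
  assert (Cw : C0 w). { unfold w. apply C0_mult; auto. apply C0_refl; auto. }
  assert (Pw : Per w). { intro u. unfold w. rewrite Lk_per. f_equal.
    rewrite <- (Pz (t - (u + 2 * PI))). f_equal; ring. }
  assert (E1 : RI (fun v => z v * Lk n (t - v)) 0 (2 * PI) = RI w (- PI) PI).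
  { transitivity (RI (fun v => w (t - v)) 0 (2 * PI)).
    apply RInt_ext'; intro v; unfold w. replace (t - (t - v)) with v by ring. reflexivity.
    rewrite RInt_reflect by auto. rewrite <- (RInt_per w (- PI)) by auto. f_equal; ring. }
  rewrite E1.
  assert (E2 : z t - / I * RI w (- PI) PI = / I * RI (fun u => (z t - z (t - u)) * Lk n u) (- PI) PI).
  { rewrite (RInt_ext' (fun u => (z t - z (t - u)) * Lk n u) (fun u => z t * Lk n u - w u)) by (intro; unfold w; ring).
    rewrite RInt_minus', RInt_scal' by (auto; apply C0_scal; auto). fold I. field. lra. }
  rewrite E2. rewrite Rabs_mult, Rabs_right by (left; apply Rinv_0_lt_compat; auto).
  assert (C3 : C0 (fun u => (z t - z (t - u)) * Lk n u)).
  { apply C0_mult; auto. apply C0_minus. apply C0_const. apply C0_refl; auto. }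
  eapply Rle_trans. apply Rmult_le_compat_l. left; apply Rinv_0_lt_compat; auto.
  apply RI_abs; auto; lra.
  eapply Rle_trans. apply Rmult_le_compat_l. left; apply Rinv_0_lt_compat; auto.
  apply (RI_le _ (fun u => Lz * (Rabs u * Lk n u))). lra.
  apply (C0_comp _ Rabs); auto; apply C0_abs. apply C0_scal, C0_mult; auto; apply C0_abs.
  intros u _. rewrite Rabs_mult, (Rabs_right (Lk n u)) by (apply Rle_ge, Lk_nonneg).
  rewrite <- Rmult_assoc. apply Rmult_le_compat_r. apply Lk_nonneg.
  replace (Rabs u) with (Rabs (t - (t - u))) by (f_equal; ring). apply Lip.
  rewrite RInt_scal' by (apply C0_mult; auto; apply C0_abs).
  pose proof (int_uL n eta He He2).
  apply Rle_trans with (/ I * Lz * (eta * I + 2 * PI * (PI * ((1 + cos eta) / 2) ^ n))).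
  rewrite Rmult_assoc. apply Rmult_le_compat_l. left; apply Rinv_0_lt_compat; auto.
  apply Rmult_le_compat_l; auto.
  right. field. lra. Qed.

Lemma density z Lz : C0 z -> Per z -> 0 <= Lz ->
  (forall a b, Rabs (z a - z b) <= Lz * Rabs (a - b)) ->
  forall eps, 0 < eps -> exists N, RI (fun t => z t ^ 2) 0 (2 * PI) - PN N z <= eps.
Proof. intros Cz Pz HL Lip eps Heps. pose proof PI_RGT_0 as Hpi. pose proof PI2_1 as Hpi1.
  set (e := Rmin 1 (eps / (2 * PI))).
  assert (He : 0 < e) by (unfold e; apply Rmin_glb_lt; [lra| apply Rdiv_lt_0_compat; lra]).
  assert (He1 : e <= 1) by apply Rmin_l.
  assert (He2 : 2 * PI * e ^ 2 <= eps).
  { assert (e <= eps / (2 * PI)) by apply Rmin_r.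
    assert (e ^ 2 <= e) by (simpl; nra).
    apply Rle_trans with (2 * PI * (eps / (2 * PI))). apply Rmult_le_compat_l; lra. right; field; lra. }
  set (L' := Lz + 1).
  set (eta := Rmin 1 (e / (2 * L'))).
  assert (Heta : 0 < eta) by (unfold eta; apply Rmin_glb_lt; [lra| apply Rdiv_lt_0_compat; unfold L'; lra]).
  assert (Heta1 : eta <= 1) by apply Rmin_l.
  assert (Heta2 : Lz * eta <= e / 2).
  { assert (eta <= e / (2 * L')) by apply Rmin_r.
    apply Rle_trans with (L' * eta). apply Rmult_le_compat_r; unfold L'; lra.
    apply Rle_trans with (L' * (e / (2 * L'))). apply Rmult_le_compat_l; unfold L' in *; lra.
    right; field; unfold L'; lra. }
  set (rho := eta / 2).
  set (q := (1 + cos eta) / 2). set (q' := (1 + cos rho) / 2).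
  assert (Hcos : 0 < cos eta) by (apply cos_gt_0; lra).
  assert (Hqq : cos eta < cos rho) by (apply cos_decreasing_1; unfold rho; lra).
  assert (Hq : 0 < q) by (unfold q; lra).
  assert (Hq' : q < q') by (unfold q, q'; lra).
  set (r := q / q').
  assert (Hr : Rabs r < 1).
  { unfold r. rewrite Rabs_right. apply Rmult_lt_reg_r with q'. lra. unfold Rdiv; rewrite Rmult_assoc, Rinv_l; lra.
    apply Rle_ge, Rlt_le, Rdiv_lt_0_compat; lra. }
  set (y := e * rho / (2 * L' * PI ^ 2)).
  assert (Hy : 0 < y). { unfold y, rho, L'. apply Rdiv_lt_0_compat. nra. assert (0 < PI ^ 2) by (apply pow_lt; lra). nra. }
  destruct (pow_lt_1_zero r Hr y Hy) as [n Hn].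
  specialize (Hn n (le_n n)).
  set (I := RI (Lk n) (- PI) PI).
  assert (HI : 2 * rho * q' ^ n <= I) by (apply I_lower; unfold rho; lra).
  assert (Hq'n : 0 < q' ^ n) by (apply pow_lt; lra).
  assert (HI0 : 0 < I). { assert (0 < 2 * rho * q' ^ n) by (unfold rho; nra). lra. }
  set (T := fun t => / I * RI (fun v => z v * Lk n (t - v)) 0 (2 * PI)).
  assert (Hbound : forall t, Rabs (z t - T t) <= e).
  { intro t. eapply Rle_trans. apply (approx_bound z Lz n eta t); auto; lra.
    fold I. assert (Hqn : q ^ n = r ^ n * q' ^ n).
    { rewrite <- Rpow_mult_distr. f_equal. unfold r; field; lra. }
    assert (Hrn : 0 <= r ^ n) by (apply pow_le; unfold r; apply Rlt_le, Rdiv_lt_0_compat; lra).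
    rewrite Rabs_right in Hn by lra. fold q.
    assert (Lz * (2 * PI * (PI * q ^ n)) / I <= L' * PI ^ 2 * r ^ n / rho).
    { rewrite Hqn. apply Rle_trans with (L' * (2 * PI * (PI * (r ^ n * q' ^ n))) / (2 * rho * q' ^ n)).
      unfold Rdiv. apply Rmult_le_compat. apply Rmult_le_pos; auto. assert (0 <= r^n * q'^n) by nra. nra.
      left; apply Rinv_0_lt_compat; lra.
      apply Rmult_le_compat_r. assert (0 <= r^n * q'^n) by nra. nra. unfold L'; lra.
      apply Rinv_le_contravar; auto. unfold rho; nra.
      right. field. unfold rho; lra. }
    assert (L' * PI ^ 2 * r ^ n / rho <= e / 2).
    { apply Rmult_le_reg_r with rho. unfold rho; lra.
      unfold Rdiv. rewrite Rmult_assoc, Rinv_l, Rmult_1_r by (unfold rho; lra).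
      assert (r ^ n <= y) by lra. unfold y in H0.
      assert (0 < 2 * L' * PI ^ 2) by (unfold L'; assert (0 < PI^2) by (apply pow_lt; lra); nra).
      apply Rmult_le_compat_l with (r := 2 * L' * PI ^ 2) in H0; [|lra].
      replace (2 * L' * PI ^ 2 * (e * rho / (2 * L' * PI ^ 2))) with (e * rho) in H0 by (field; repeat split; unfold L'; lra).
      nra. }
    lra. }
  assert (TPT : TP n T). { apply tpm. apply TP_conv; auto. apply TP_Lk. }
  destruct (TP_rep n T TPT) as [al [be Hrep]].
  exists n. eapply Rle_trans. apply (best_approx z n al be Cz).
  rewrite (RInt_ext' _ (fun t => (z t - T t) ^ 2)) by (intro; rewrite Hrep; reflexivity).
  apply Rle_trans with (RI (fun _ => e ^ 2) 0 (2 * PI)).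
  apply RI_le. lra. apply C0_pow, C0_minus; auto. apply TP_C0 with n; auto. apply C0_const.
  intros t _. rewrite <- (pow2_abs (z t - T t)). apply pow_incr. split. apply Rabs_pos. apply Hbound.
  rewrite RInt_const'. lra. Qed.

Definition dlt (mu tau l1 : R) :=
  Rmin ((l1 * mu) ^ 2) (Rmin (((1 - sin (mu * tau)) * l1 / (2 * tau)) ^ 2) (l1 * mu * (1 - sin (mu * tau)))).

Lemma dlt_pos mu tau l1 : 0 < mu -> 0 < tau -> 0 < l1 -> sin (mu * tau) < 1 -> 0 < dlt mu tau l1.
Proof. intros. unfold dlt. repeat apply Rmin_glb_lt.
  apply pow_lt; nra. apply pow_lt. apply Rdiv_lt_0_compat; nra.
  assert (0 < l1 * mu) by nra. nra. Qed.

Lemma le_eps a b : (forall eps, 0 < eps -> a <= b + eps) -> a <= b.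
Proof. intros H. destruct (Rle_lt_dec a b); auto. specialize (H ((a - b) / 2)). lra. Qed.

Lemma lip_of_deriv z dz Lz : (forall x, is_derive z x (dz x)) -> (forall x, Rabs (dz x) <= Lz) ->
  forall a b, Rabs (z a - z b) <= Lz * Rabs (a - b).
Proof. intros Hd Hb a b. destruct (MVT_gen z b a dz) as [c [_ Hc]].
  - intros; apply Hd.
  - intros. apply continuity_pt_filterlim. apply (ex_derive_continuous (K:=R_AbsRing) (V:=R_NormedModule)). eexists; apply Hd.
  - rewrite Hc, Rabs_mult. apply Rmult_le_compat_r. apply Rabs_pos. auto. Qed.

Lemma coercive z dz Lz mu tau l1 l : (forall x, is_derive z x (dz x)) -> C0 dz -> Per z ->
  (forall x, Rabs (dz x) <= Lz) -> 0 < mu -> 0 < tau -> 0 < l1 -> l1 <= l -> sin (mu * tau) < 1 ->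
  dlt mu tau l1 * RI (fun t => z t ^ 2) 0 (2 * PI) <=
  RI (fun t => (dz t + l * mu * z (t - tau / l)) ^ 2) 0 (2 * PI).
Proof. intros Hd Cd Pz Hb Hmu Ht Hl1 Hl Hs.
  pose proof (C0_z z dz Hd) as Cz.
  assert (HL : 0 <= Lz) by (specialize (Hb 0); pose proof (Rabs_pos (dz 0)); lra).
  pose proof (dlt_pos mu tau l1 Hmu Ht Hl1 Hs) as Hdp.
  assert (Cf : C0 (fun t => dz t + l * mu * z (t - tau / l))).
  { apply C0_plus; auto. apply C0_scal. apply (C0_comp (fun t => t - tau / l) z); auto.
    apply C0_minus; [apply C0_id|apply C0_const]. }
  apply le_eps. intros eps Heps.
  destruct (density z Lz Cz Pz HL (lip_of_deriv z dz Lz Hd Hb) (eps / dlt mu tau l1)) as [N HN].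
  apply Rdiv_lt_0_compat; auto.
  pose proof (PN_f z dz Hd Cd Pz N (l * mu) (tau / l) (dlt mu tau l1)) as HP.
  assert (HP' : dlt mu tau l1 * PN N z <= PN N (fun t => dz t + l * mu * z (t - tau / l))).
  { apply HP. intro k. apply phi_lb; auto. }
  pose proof (bessel _ N Cf).
  apply Rle_trans with (dlt mu tau l1 * (PN N z + eps / dlt mu tau l1)).
  apply Rmult_le_compat_l; lra.
  replace (dlt mu tau l1 * (PN N z + eps / dlt mu tau l1)) with (dlt mu tau l1 * PN N z + eps) by (field; lra).
  lra. Qed.

Lemma per_nat g t n : Per g -> g (t + INR n * (2 * PI)) = g t.
Proof. intros Hp. induction n. simpl. f_equal; ring.
  rewrite S_INR. replace (t + (INR n + 1) * (2 * PI)) with ((t + INR n * (2 * PI)) + 2 * PI) by ring.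
  rewrite Hp; auto. Qed.

Lemma per_Z g t m : Per g -> g (t + IZR m * (2 * PI)) = g t.
Proof. intros Hp. destruct m as [|p|p].
  - simpl. f_equal; ring.
  - rewrite <- positive_nat_Z, <- INR_IZR_INZ. apply per_nat; auto.
  - rewrite <- (per_nat g (t + IZR (Z.neg p) * (2 * PI)) (Pos.to_nat p)) by auto.
    f_equal. rewrite INR_IZR_INZ, positive_nat_Z, <- Pos2Z.opp_pos, opp_IZR. ring. Qed.

Lemma reduce t : exists t' m, 0 <= t' <= 2 * PI /\ t = t' + IZR m * (2 * PI).
Proof. pose proof PI_RGT_0. destruct (archimed (t / (2 * PI))) as [H1 H2].
  exists (t - IZR (up (t / (2 * PI)) - 1) * (2 * PI)), (up (t / (2 * PI)) - 1)%Z.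
  split; [|ring]. rewrite minus_IZR. set (u := IZR (up (t / (2 * PI)))) in *.
  assert (t = t / (2 * PI) * (2 * PI)) by (field; lra).
  split; nra. Qed.

Lemma per_reduce g t : Per g -> exists t', 0 <= t' <= 2 * PI /\ g t = g t'.
Proof. intros Hp. destruct (reduce t) as [t' [m [H E]]]. exists t'. split; auto. rewrite E. apply per_Z; auto. Qed.

Lemma per_bounded g : C0 g -> Per g -> exists M, forall t, Rabs (g t) <= M.
Proof. intros Cg Pg. pose proof PI_RGT_0.
  destruct (continuity_ab_maj (fun t => Rabs (g t)) 0 (2 * PI)) as [Mx [HM _]]. lra.
  intros c _. apply continuity_pt_filterlim. apply (C0_comp g Rabs Cg C0_abs).
  exists (Rabs (g Mx)). intro t. destruct (per_reduce g t Pg) as [t' [Ht E]]. rewrite E. apply HM; auto. Qed.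

Lemma pos_int g t0 : C0 g -> 0 <= t0 <= 2 * PI -> g t0 <> 0 -> 0 < RI (fun t => g t ^ 2) 0 (2 * PI).
Proof. intros Cg Ht0 Hg. pose proof PI_RGT_0.
  assert (Hc : continuity_pt g t0) by (apply continuity_pt_filterlim; apply Cg).
  destruct (Hc (Rabs (g t0) / 2)) as [d [Hd Hd2]]. apply Rabs_pos_lt in Hg. lra.
  set (al := Rmax 0 (t0 - d / 2)). set (be := Rmin (2 * PI) (t0 + d / 2)).
  assert (Hab : al < be).
  { unfold al, be. unfold Rmax, Rmin. destruct (Rle_dec 0 (t0 - d / 2)), (Rle_dec (2 * PI) (t0 + d / 2)); lra. }
  assert (Hal : 0 <= al) by apply Rmax_l. assert (Hbe : be <= 2 * PI) by apply Rmin_l.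
  assert (Hpos : 0 < RI (fun t => g t ^ 2) al be).
  { unfold RI. apply RInt_gt_0; auto.
    - intros x Hx. assert (g x <> 0).
      { destruct (Req_dec x t0) as [->|Hne]. exact Hg.
        assert (Rabs (x - t0) < d).
        { unfold al, be in Hx. pose proof (Rmax_r 0 (t0 - d / 2)). pose proof (Rmin_r (2 * PI) (t0 + d / 2)).
          apply Rabs_def1; lra. }
        assert (HH : R_dist (g x) (g t0) < Rabs (g t0) / 2).
        { apply Hd2. split. split. exact I. auto. unfold R_dist. simpl. auto. }
        unfold R_dist in HH. intro E. rewrite E in HH. rewrite Rminus_0_l, Rabs_Ropp in HH.
        pose proof (Rabs_pos (g t0)). lra. }
      simpl. rewrite Rmult_1_r. apply Rsqr_pos_lt; auto.
    - intros; apply (C0_pow g 2 Cg). }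
  assert (C2 : C0 (fun t => g t ^ 2)) by (apply C0_pow; auto).
  rewrite <- (RInt_Chasles' _ 0 al (2 * PI)), <- (RInt_Chasles' _ al be (2 * PI)) by auto.
  pose proof (RI_nonneg (fun t => g t ^ 2) 0 al Hal C2 (fun x => pow2_ge_0 _)).
  pose proof (RI_nonneg (fun t => g t ^ 2) be (2 * PI) Hbe C2 (fun x => pow2_ge_0 _)). lra. Qed.

Lemma sub_int f a b : 0 <= a -> a <= b -> b <= 2 * PI -> C0 f -> (forall x, 0 <= f x) ->
  RI f a b <= RI f 0 (2 * PI).
Proof. intros. rewrite <- (RInt_Chasles' f 0 a (2 * PI)), <- (RInt_Chasles' f a b (2 * PI)) by auto.
  pose proof (RI_nonneg f 0 a H H2 H3). pose proof (RI_nonneg f b (2 * PI) H1 H2 H3). lra. Qed.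

Lemma sup_bound (x dx : R -> R) : (forall t, is_derive x t (dx t)) -> C0 dx -> RI x 0 (2 * PI) = 0 ->
  forall t, 0 <= t <= 2 * PI -> Rabs (x t) <= sqrt (2 * PI) * sqrt (RI (fun u => dx u ^ 2) 0 (2 * PI)).
Proof. intros Hd Cd Hz t Ht. pose proof PI_RGT_0 as Hpi.
  pose proof (C0_z x dx Hd) as Cx.
  set (A := RI (fun u => Rabs (dx u)) 0 (2 * PI)).
  assert (Cad : C0 (fun u => Rabs (dx u))) by (apply (C0_comp dx Rabs); auto; apply C0_abs).
  assert (H1 : forall u, 0 <= u <= 2 * PI -> Rabs (x t - x u) <= A).
  { intros u Hu. rewrite <- (RI_FTC x dx u t) by auto.
    destruct (Rle_lt_dec u t).
    - eapply Rle_trans. apply RI_abs; auto. apply sub_int; auto; try lra. intros; apply Rabs_pos.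
    - rewrite RInt_swap', Rabs_Ropp by auto. eapply Rle_trans. apply RI_abs; auto; lra.
      apply sub_int; auto; try lra. intros; apply Rabs_pos. }
  assert (HA0 : 0 <= A) by (apply RI_nonneg; auto; [lra|intros; apply Rabs_pos]).
  assert (H2 : Rabs (x t) <= A).
  { assert (E : x t = / (2 * PI) * RI (fun u => x t - x u) 0 (2 * PI)).
    { rewrite RInt_minus', RInt_const', Hz by (auto; apply C0_const). field. lra. }
    rewrite E, Rabs_mult, Rabs_right by (apply Rle_ge, Rlt_le, Rinv_0_lt_compat; lra).
    apply Rle_trans with (/ (2 * PI) * RI (fun _ => A) 0 (2 * PI)).
    apply Rmult_le_compat_l. left; apply Rinv_0_lt_compat; lra.
    eapply Rle_trans. apply RI_abs. lra. apply C0_minus; auto; apply C0_const.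
    apply RI_le. lra. apply (C0_comp (fun u => x t - x u) Rabs). apply C0_minus; auto; apply C0_const. apply C0_abs.
    apply C0_const. intros; apply H1; auto.
    rewrite RInt_const'. right; field; lra. }
  set (D := RI (fun u => dx u ^ 2) 0 (2 * PI)).
  assert (H3 : A ^ 2 <= 2 * PI * D).
  { set (c := A / (2 * PI)).
    assert (H0 : 0 <= RI (fun u => (Rabs (dx u) - c) ^ 2) 0 (2 * PI)).
    { apply RI_sq_ge0. apply C0_minus; auto; apply C0_const. }
    rewrite (RInt_ext' _ (fun u => dx u ^ 2 - 2 * c * Rabs (dx u) + c ^ 2)) in H0.
    2:{ intro u. rewrite <- (pow2_abs (dx u)). ring. }
    assert (E : RI (fun u => dx u ^ 2 - 2 * c * Rabs (dx u) + c ^ 2) 0 (2 * PI) = D - 2 * c * A + 2 * PI * c ^ 2).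
    { assert (C1 : C0 (fun u => 2 * c * Rabs (dx u))) by (apply C0_scal; auto).
      assert (C2 : C0 (fun u => dx u ^ 2)) by (apply C0_pow; auto).
      rewrite (RInt_plus' (fun u => dx u ^ 2 - 2 * c * Rabs (dx u)) (fun _ => c ^ 2)) by (try apply C0_const; apply C0_minus; auto).
      rewrite (RInt_minus' (fun u => dx u ^ 2) (fun u => 2 * c * Rabs (dx u))) by auto.
      rewrite RInt_scal' by auto. rewrite RInt_const'. unfold D, A. ring. }
    rewrite E in H0. unfold c in H0.
    replace (D - 2 * (A / (2 * PI)) * A + 2 * PI * (A / (2 * PI)) ^ 2) with (D - A ^ 2 / (2 * PI)) in H0 by (field; lra).
    apply Rmult_le_reg_r with (/ (2 * PI)). apply Rinv_0_lt_compat; lra.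
    replace (2 * PI * D * / (2 * PI)) with D by (field; lra). unfold Rdiv in H0. lra. }
  eapply Rle_trans. apply H2. rewrite <- sqrt_mult by (lra || (apply RI_sq_ge0; auto)).
  rewrite <- (sqrt_pow2 A HA0). apply sqrt_le_1_alt. auto. Qed.


Lemma cs2 a b u v : (a * u + b * v) ^ 2 <= (a ^ 2 + b ^ 2) * (u ^ 2 + v ^ 2).
Proof. assert (E : (a ^ 2 + b ^ 2) * (u ^ 2 + v ^ 2) - (a * u + b * v) ^ 2 = (a * v - b * u) ^ 2) by ring. pose proof (pow2_ge_0 (a * v - b * u)). lra. Qed.

Lemma sq_le_m X m : Rabs X <= m -> X ^ 2 <= m ^ 2.
Proof. intros. rewrite <- (pow2_abs X). apply pow_incr. split; auto. apply Rabs_pos. Qed.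

Lemma alg_bound (a11 a12 a21 a22 B12 B22 mu mu1 mu2 l2 lam m X1 X2 Y1 Y2 : R) :
  mu1 <> mu2 -> B12 <> 0 -> 0 < lam -> lam <= l2 -> Rabs X1 <= m -> Rabs X2 <= m ->
  let W1 := (B22 - mu1) * Y1 - B12 * Y2 in
  let W2 := (B22 - mu2) * Y1 - B12 * Y2 in
  let M11 := / (mu2 - mu1) in let M12 := - / (mu2 - mu1) in
  let M21 := ((B22 - mu1) / (mu2 - mu1) - 1) / B12 in
  let M22 := - ((B22 - mu1) / ((mu2 - mu1) * B12)) in
  let cM := M11 ^ 2 + M12 ^ 2 + (M21 ^ 2 + M22 ^ 2) in
  let cP := ((B22 - mu) * a11) ^ 2 + ((B22 - mu) * a12) ^ 2 in
  let cQ := (B12 * a21) ^ 2 + (B12 * a22) ^ 2 in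
  (- lam * ((B22 - mu) * (a11 * Y1 + a12 * Y2) * X1 - B12 * (a21 * Y1 + a22 * Y2) * X2)) ^ 2
  <= l2 ^ 2 * 2 * (cP + cQ) * cM * m ^ 2 * (W1 ^ 2 + W2 ^ 2).
Proof. intros Hmu HB Hl Hl2 HX1 HX2 W1 W2 M11 M12 M21 M22 cM cP cQ.
  set (P := (B22 - mu) * a11 * Y1 + (B22 - mu) * a12 * Y2).
  set (Q := - (B12 * a21) * Y1 + - (B12 * a22) * Y2).
  assert (EF : (- lam * ((B22 - mu) * (a11 * Y1 + a12 * Y2) * X1 - B12 * (a21 * Y1 + a22 * Y2) * X2)) ^ 2
     = lam ^ 2 * (X1 * P + X2 * Q) ^ 2) by (unfold P, Q; ring).
  rewrite EF.
  assert (H1 : (X1 * P + X2 * Q) ^ 2 <= (X1 ^ 2 + X2 ^ 2) * (P ^ 2 + Q ^ 2)) by apply cs2.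
  assert (H2 : X1 ^ 2 + X2 ^ 2 <= 2 * m ^ 2) by (pose proof (sq_le_m X1 m HX1); pose proof (sq_le_m X2 m HX2); lra).
  assert (HY1 : Y1 = M11 * W1 + M12 * W2) by (unfold M11, M12, W1, W2; field; intro; apply Hmu; lra).
  assert (HY2 : Y2 = M21 * W1 + M22 * W2) by (unfold M21, M22, W1, W2; field; split; auto; intro; apply Hmu; lra).
  assert (H3 : Y1 ^ 2 + Y2 ^ 2 <= cM * (W1 ^ 2 + W2 ^ 2)).
  { rewrite HY1 at 1. rewrite HY2 at 1. pose proof (cs2 M11 M12 W1 W2). pose proof (cs2 M21 M22 W1 W2).
    unfold cM. lra. }
  assert (H4 : P ^ 2 + Q ^ 2 <= (cP + cQ) * (Y1 ^ 2 + Y2 ^ 2)).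
  { pose proof (cs2 ((B22 - mu) * a11) ((B22 - mu) * a12) Y1 Y2).
    pose proof (cs2 (- (B12 * a21)) (- (B12 * a22)) Y1 Y2).
    unfold P, Q, cP, cQ. replace ((- (B12 * a21)) ^ 2) with ((B12 * a21) ^ 2) in H0 by ring.
    replace ((- (B12 * a22)) ^ 2) with ((B12 * a22) ^ 2) in H0 by ring. lra. }
  assert (HcP : 0 <= cP + cQ) by (unfold cP, cQ; pose proof (pow2_ge_0 ((B22 - mu) * a11));
    pose proof (pow2_ge_0 ((B22 - mu) * a12)); pose proof (pow2_ge_0 (B12 * a21)); pose proof (pow2_ge_0 (B12 * a22)); lra).
  assert (HcM : 0 <= cM) by (unfold cM; pose proof (pow2_ge_0 M11); pose proof (pow2_ge_0 M12);
    pose proof (pow2_ge_0 M21); pose proof (pow2_ge_0 M22); lra).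
  assert (Hl22 : lam ^ 2 <= l2 ^ 2) by (apply pow_incr; lra).
  pose proof (pow2_ge_0 (X1 * P + X2 * Q)). pose proof (pow2_ge_0 X1). pose proof (pow2_ge_0 X2).
  pose proof (pow2_ge_0 P). pose proof (pow2_ge_0 Q). pose proof (pow2_ge_0 Y1). pose proof (pow2_ge_0 Y2).
  pose proof (pow2_ge_0 W1). pose proof (pow2_ge_0 W2). pose proof (pow2_ge_0 m). pose proof (pow2_ge_0 lam).
  apply Rle_trans with (l2 ^ 2 * ((X1 ^ 2 + X2 ^ 2) * (P ^ 2 + Q ^ 2))).
  apply Rmult_le_compat; auto.
  apply Rle_trans with (l2 ^ 2 * ((2 * m ^ 2) * ((cP + cQ) * (cM * (W1 ^ 2 + W2 ^ 2))))).
  apply Rmult_le_compat_l. apply pow2_ge_0. apply Rmult_le_compat; try lra.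
  apply Rle_trans with ((cP + cQ) * (Y1 ^ 2 + Y2 ^ 2)); auto. apply Rmult_le_compat_l; auto.
  right; ring. Qed.

Lemma is_derive_lin2 (f g : R -> R) x a b p q : is_derive f x a -> is_derive g x b ->
  is_derive (fun t => p * f t - q * g t) x (p * a - q * b).
Proof. intros Ha Hb. apply (is_derive_minus (K:=R_AbsRing) (V:=R_NormedModule) (fun t => p * f t) (fun t => q * g t)).
  apply is_derive_scal; auto. apply is_derive_scal; auto. Qed.

Lemma C0_shift f c : C0 f -> C0 (fun t => f (t - c)).
Proof. intros; apply (C0_comp (fun t => t - c) f); auto. apply C0_minus; [apply C0_id|apply C0_const]. Qed.

Lemma Per_shift f c : Per f -> Per (fun t => f (t - c)).
Proof. intros H t. replace (t + 2 * PI - c) with ((t - c) + 2 * PI) by ring. apply H. Qed.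

Definition Kc (a11 a12 a21 a22 b1 b2 mu mu1 mu2 l2 : R) :=
  let B12 := b1 * a12 in let B22 := b2 * a22 in
  let M11 := / (mu2 - mu1) in let M12 := - / (mu2 - mu1) in
  let M21 := ((B22 - mu1) / (mu2 - mu1) - 1) / B12 in
  let M22 := - ((B22 - mu1) / ((mu2 - mu1) * B12)) in
  let cM := M11 ^ 2 + M12 ^ 2 + (M21 ^ 2 + M22 ^ 2) in
  let cP := ((B22 - mu) * a11) ^ 2 + ((B22 - mu) * a12) ^ 2 in
  let cQ := (B12 * a21) ^ 2 + (B12 * a22) ^ 2 in
  l2 ^ 2 * 2 * (cP + cQ) * cM.

Lemma Kc_nonneg a11 a12 a21 a22 b1 b2 mu mu1 mu2 l2 : 0 <= Kc a11 a12 a21 a22 b1 b2 mu mu1 mu2 l2.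
Proof. unfold Kc. cbv zeta.
  apply Rmult_le_pos; [apply Rmult_le_pos; [apply Rmult_le_pos; [apply pow2_ge_0|lra]|] |];
  repeat apply Rplus_le_le_0_compat; apply pow2_ge_0. Qed.

Section Sol.
Variables (a11 a12 a21 a22 b1 b2 mu1 mu2 tau l1 l2 lam m : R) (x1 x2 : R -> R).
Hypotheses (Hb1 : 0 < b1) (Hb2 : 0 < b2) (Ha12 : 0 < a12).
Hypothesis Hch1 : (b1 * a11 - mu1) * (b2 * a22 - mu1) - (b1 * a12) * (b2 * a21) = 0.
Hypothesis Hch2 : (b1 * a11 - mu2) * (b2 * a22 - mu2) - (b1 * a12) * (b2 * a21) = 0.
Hypotheses (Hmu : mu1 <> mu2) (Hmu1 : 0 < mu1) (Hmu2 : 0 < mu2) (Ht : 0 < tau)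
  (Hs1 : sin (mu1 * tau) < 1) (Hs2 : sin (mu2 * tau) < 1) (Hl1 : 0 < l1) (Hlam : l1 <= lam <= l2).
Hypotheses (C1 : C0 x1) (C2 : C0 x2) (P1 : Per x1) (P2 : Per x2).
Hypothesis Hsol : solves_P a11 a12 a21 a22 b1 b2 tau lam x1 x2.
Hypothesis Hm : forall t, 0 <= t <= 2 * PI -> Rabs (x1 t) <= m /\ Rabs (x2 t) <= m.
Hypothesis HK : (Kc a11 a12 a21 a22 b1 b2 mu1 mu1 mu2 l2 + Kc a11 a12 a21 a22 b1 b2 mu2 mu1 mu2 l2) * m ^ 2
   <= Rmin (dlt mu1 tau l1) (dlt mu2 tau l1) / 2.

Let s := tau / lam.
Let dx1 := fun t => - lam * (a11 * x1 (t - s) + a12 * x2 (t - s)) * (b1 + x1 t).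
Let dx2 := fun t => - lam * (a21 * x1 (t - s) + a22 * x2 (t - s)) * (b2 + x2 t).
Let zz (mu : R) := fun t => (b2 * a22 - mu) * x1 t - (b1 * a12) * x2 t.
Let dzz (mu : R) := fun t => (b2 * a22 - mu) * dx1 t - (b1 * a12) * dx2 t.

Lemma Cdx1 : C0 dx1.
Proof. unfold dx1. apply C0_mult. apply C0_scal. apply C0_plus; apply C0_scal; apply C0_shift; auto.
  apply C0_plus; auto; apply C0_const. Qed.
Lemma Cdx2 : C0 dx2.
Proof. unfold dx2. apply C0_mult. apply C0_scal. apply C0_plus; apply C0_scal; apply C0_shift; auto.
  apply C0_plus; auto; apply C0_const. Qed.
Lemma Pdx1 : Per dx1.
Proof. intro t. unfold dx1. rewrite (Per_shift x1 s P1), (Per_shift x2 s P2), P1. reflexivity. Qed.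
Lemma Pdx2 : Per dx2.
Proof. intro t. unfold dx2. rewrite (Per_shift x1 s P1), (Per_shift x2 s P2), P2. reflexivity. Qed.

Lemma Dz mu : forall t, is_derive (zz mu) t (dzz mu t).
Proof. intro t. unfold zz, dzz. apply is_derive_lin2. apply (Hsol t). apply (Hsol t). Qed.
Lemma Cdz mu : C0 (dzz mu).
Proof. unfold dzz. apply C0_minus; apply C0_scal; [apply Cdx1|apply Cdx2]. Qed.
Lemma Pz mu : Per (zz mu).
Proof. intro t. unfold zz. rewrite P1, P2. reflexivity. Qed.
Lemma Cz mu : C0 (zz mu).
Proof. unfold zz. apply C0_minus; apply C0_scal; auto. Qed.
Lemma Bdz mu : exists L, forall t, Rabs (dzz mu t) <= L.
Proof. apply per_bounded. apply Cdz. intro t. unfold dzz. rewrite Pdx1, Pdx2. reflexivity. Qed.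

Lemma ident mu : (b1 * a11 - mu) * (b2 * a22 - mu) - (b1 * a12) * (b2 * a21) = 0 -> forall t,
  dzz mu t + lam * mu * zz mu (t - tau / lam) =
  - lam * ((b2 * a22 - mu) * (a11 * x1 (t - s) + a12 * x2 (t - s)) * x1 t - (b1 * a12) * (a21 * x1 (t - s) + a22 * x2 (t - s)) * x2 t).
Proof. intros Hc t. unfold dzz, zz, dx1, dx2. fold s.
  match goal with |- ?L = ?R => assert (E : L - R = - lam * x1 (t - s) * ((b1 * a11 - mu) * (b2 * a22 - mu) - (b1 * a12) * (b2 * a21))) by ring end.
  rewrite Hc in E. lra. Qed.

Lemma Sbound mu : (b1 * a11 - mu) * (b2 * a22 - mu) - (b1 * a12) * (b2 * a21) = 0 ->
  0 < mu -> sin (mu * tau) < 1 ->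
  dlt mu tau l1 * RI (fun t => zz mu t ^ 2) 0 (2 * PI) <=
  Kc a11 a12 a21 a22 b1 b2 mu mu1 mu2 l2 * m ^ 2 *
  (RI (fun t => zz mu1 t ^ 2) 0 (2 * PI) + RI (fun t => zz mu2 t ^ 2) 0 (2 * PI)).
Proof. intros Hc Hmu0 Hsm. pose proof PI_RGT_0 as Hpi.
  assert (Hl0 : 0 < lam) by lra.
  destruct (Bdz mu) as [L HL].
  pose proof (coercive (zz mu) (dzz mu) L mu tau l1 lam (Dz mu) (Cdz mu) (Pz mu) HL Hmu0 Ht Hl1 (proj1 Hlam) Hsm) as H.
  eapply Rle_trans. apply H.
  rewrite (RInt_ext' _ (fun t => (- lam * ((b2 * a22 - mu) * (a11 * x1 (t - s) + a12 * x2 (t - s)) * x1 t - (b1 * a12) * (a21 * x1 (t - s) + a22 * x2 (t - s)) * x2 t)) ^ 2))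
    by (intro t; rewrite ident; auto).
  assert (Cz1 : C0 (fun t => zz mu1 (t - s) ^ 2)) by (apply C0_pow, C0_shift, Cz).
  assert (Cz2 : C0 (fun t => zz mu2 (t - s) ^ 2)) by (apply C0_pow, C0_shift, Cz).
  apply Rle_trans with (RI (fun t => Kc a11 a12 a21 a22 b1 b2 mu mu1 mu2 l2 * m ^ 2 * (zz mu1 (t - s) ^ 2 + zz mu2 (t - s) ^ 2)) 0 (2 * PI)).
  - apply RI_le. lra.
    + apply C0_pow. apply C0_scal. apply C0_minus; apply C0_mult; try (apply C0_scal; apply C0_plus; apply C0_scal; apply C0_shift; auto); auto.
    + apply C0_scal. apply C0_plus; auto.
    + intros t Ht0. destruct (Hm t Ht0) as [H1 H2].
      assert (HB : b1 * a12 <> 0) by (apply Rgt_not_eq; apply Rmult_lt_0_compat; auto).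
      pose proof (alg_bound a11 a12 a21 a22 (b1 * a12) (b2 * a22) mu mu1 mu2 l2 lam m (x1 t) (x2 t) (x1 (t - s)) (x2 (t - s)) Hmu HB Hl0 (proj2 Hlam) H1 H2) as HA.
      cbv zeta in HA. unfold Kc. cbv zeta. unfold zz. exact HA.
  - rewrite RInt_scal' by (apply C0_plus; auto). rewrite RInt_plus' by auto.
    assert (Q : forall mu', RI (fun t => zz mu' (t - s) ^ 2) 0 (2 * PI) = RI (fun t => zz mu' t ^ 2) 0 (2 * PI)).
    { intro mu'. rewrite <- (RInt_per_shift (fun u => zz mu' u ^ 2) (- s)).
      apply RInt_ext'; intro; unfold Rminus; reflexivity.
      apply C0_pow, Cz. intro u; cbv beta; rewrite Pz; reflexivity. }
    rewrite !Q. right; reflexivity. Qed.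

Lemma sol_zero : forall t, 0 <= t <= 2 * PI -> x1 t = 0 /\ x2 t = 0.
Proof. intros t Ht0. pose proof PI_RGT_0 as Hpi.
  pose proof (Sbound mu1 Hch1 Hmu1 Hs1) as E1. pose proof (Sbound mu2 Hch2 Hmu2 Hs2) as E2.
  set (S1 := RI (fun t => zz mu1 t ^ 2) 0 (2 * PI)) in *.
  set (S2 := RI (fun t => zz mu2 t ^ 2) 0 (2 * PI)) in *.
  assert (HS1 : 0 <= S1) by (apply RI_sq_ge0; apply Cz).
  assert (HS2 : 0 <= S2) by (apply RI_sq_ge0; apply Cz).
  set (d := Rmin (dlt mu1 tau l1) (dlt mu2 tau l1)) in *.
  assert (Hd1 : d <= dlt mu1 tau l1) by apply Rmin_l. assert (Hd2 : d <= dlt mu2 tau l1) by apply Rmin_r.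
  assert (Hd : 0 < d) by (apply Rmin_glb_lt; apply dlt_pos; auto).
  set (K1 := Kc a11 a12 a21 a22 b1 b2 mu1 mu1 mu2 l2) in *. set (K2 := Kc a11 a12 a21 a22 b1 b2 mu2 mu1 mu2 l2) in *.
  assert (F1 : d * S1 <= dlt mu1 tau l1 * S1) by (apply Rmult_le_compat_r; auto).
  assert (F2 : d * S2 <= dlt mu2 tau l1 * S2) by (apply Rmult_le_compat_r; auto).
  assert (F3 : (K1 + K2) * m ^ 2 * (S1 + S2) <= d / 2 * (S1 + S2)) by (apply Rmult_le_compat_r; lra).
  assert (F4 : d * (S1 + S2) <= (K1 + K2) * m ^ 2 * (S1 + S2)).
  { replace ((K1 + K2) * m ^ 2 * (S1 + S2)) with (K1 * m ^ 2 * (S1 + S2) + K2 * m ^ 2 * (S1 + S2)) by ring. lra. }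
  assert (HS : S1 + S2 <= 0).
  { assert (d / 2 * (S1 + S2) <= 0) by lra. 
    destruct (Rle_lt_dec (S1 + S2) 0); auto. assert (0 < d / 2 * (S1 + S2)) by (apply Rmult_lt_0_compat; lra). lra. }
  assert (Z1 : zz mu1 t = 0).
  { destruct (Req_dec (zz mu1 t) 0); auto. pose proof (pos_int (zz mu1) t (Cz mu1) Ht0 H). fold S1 in H0. lra. }
  assert (Z2 : zz mu2 t = 0).
  { destruct (Req_dec (zz mu2 t) 0); auto. pose proof (pos_int (zz mu2) t (Cz mu2) Ht0 H). fold S2 in H0. lra. }
  unfold zz in Z1, Z2.
  assert (X1 : x1 t = 0).
  { assert ((mu2 - mu1) * x1 t = 0) by lra. apply Rmult_integral in H. destruct H; auto. exfalso; apply Hmu; lra. }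
  split; auto. rewrite X1 in Z1.
  assert (b1 * a12 * x2 t = 0) by lra. apply Rmult_integral in H. destruct H; auto.
  exfalso. assert (0 < b1 * a12) by (apply Rmult_lt_0_compat; auto). lra. Qed.
End Sol.

Lemma eig_char m11 m12 m21 m22 mu : is_eigenvalue2 m11 m12 m21 m22 mu ->
  (m11 - mu) * (m22 - mu) - m12 * m21 = 0.
Proof. intros [v1 [v2 [Hv [E1 E2]]]].
  assert (A1 : ((m11 - mu) * (m22 - mu) - m12 * m21) * v1 = 0).
  { transitivity ((m22 - mu) * (m11 * v1 + m12 * v2 - mu * v1) - m12 * (m21 * v1 + m22 * v2 - mu * v2)). ring.
    rewrite E1, E2; ring. }
  assert (A2 : ((m11 - mu) * (m22 - mu) - m12 * m21) * v2 = 0).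
  { transitivity ((m11 - mu) * (m21 * v1 + m22 * v2 - mu * v2) - m21 * (m11 * v1 + m12 * v2 - mu * v1)). ring.
    rewrite E1, E2; ring. }
  destruct Hv as [Hv|Hv]; [apply Rmult_integral in A1 | apply Rmult_integral in A2]; intuition. Qed.

Lemma sin_lt_1 x n : PI / 2 + 2 * INR n * PI < x < PI / 2 + 2 * (INR n + 1) * PI -> sin x < 1.
Proof. intros [H1 H2]. set (phi := x - PI / 2 - 2 * INR n * PI).
  replace x with ((PI / 2 + phi) + 2 * INR n * PI) by (unfold phi; ring).
  rewrite sin_period, sin_plus, sin_PI2, cos_PI2.
  replace phi with (2 * (phi / 2)) by field. rewrite cos_2a_sin.
  assert (0 < sin (phi / 2)) by (apply sin_gt_0; unfold phi; lra). nra. Qed.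

Lemma mu_neq mu1 mu2 tau (n1 n2 : nat) : n1 <> n2 ->
  PI / 2 + 2 * INR n1 * PI < mu1 * tau < PI / 2 + 2 * (INR n1 + 1) * PI ->
  PI / 2 + 2 * INR n2 * PI < mu2 * tau < PI / 2 + 2 * (INR n2 + 1) * PI -> mu1 <> mu2.
Proof. intros Hn H1 H2 E. subst. pose proof PI_RGT_0.
  assert (G1 : INR n1 < INR n2 + 1) by nra. assert (G2 : INR n2 < INR n1 + 1) by nra.
  rewrite <- S_INR in G1, G2. apply INR_lt in G1. apply INR_lt in G2. lia. Qed.

Lemma Ehat_ge (x dx : R -> R) : (forall t, is_derive x t (dx t)) -> C0 dx ->
  sqrt (RI (fun u => dx u ^ 2) 0 (2 * PI)) <= Ehat_norm x.
Proof. intros Hd Cd. pose proof (C0_z x dx Hd) as Cx. unfold Ehat_norm. apply sqrt_le_1_alt.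
  change (RI (fun u => dx u ^ 2) 0 (2 * PI) <= RI (fun t => Derive x t ^ 2 + x t ^ 2) 0 (2 * PI)).
  rewrite (RInt_ext' (fun t => Derive x t ^ 2 + x t ^ 2) (fun t => dx t ^ 2 + x t ^ 2))
    by (intro t; rewrite (is_derive_unique x t (dx t) (Hd t)); reflexivity).
  apply RI_le. pose proof PI_RGT_0; lra. apply C0_pow; auto. apply C0_plus; apply C0_pow; auto.
  intros; pose proof (pow2_ge_0 (x x0)); lra. Qed.

Theorem lemma4p1
  (r1 r2 a11 a12 a21 a22 b1 b2 mu1 mu2 tau lam1 lam2 : R) (n1 n2 : nat) :
  0 < a11 -> 0 < a12 -> 0 < a21 -> 0 < a22 ->
  a11 * a22 - a12 * a21 <> 0 ->
  a11 * b1 + a12 * b2 = r1 -> a21 * b1 + a22 * b2 = r2 ->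
  0 < b1 -> 0 < b2 ->
  (forall y1 y2 : R, (y1 <> 0 \/ y2 <> 0) ->
     (a11 * y1 + a12 * y2) * y1 + (a21 * y1 + a22 * y2) * y2 > 0) ->
  is_eigenvalue2 (b1 * a11) (b1 * a12) (b2 * a21) (b2 * a22) mu1 ->
  is_eigenvalue2 (b1 * a11) (b1 * a12) (b2 * a21) (b2 * a22) mu2 ->
  0 < mu1 -> 0 < mu2 ->
  0 < tau ->
  Rmin (2 * PI / mu1) (2 * PI / mu2) < tau ->
  n1 <> n2 ->
  PI / 2 + 2 * INR n1 * PI < mu1 * tau < PI / 2 + 2 * (INR n1 + 1) * PI ->
  PI / 2 + 2 * INR n2 * PI < mu2 * tau < PI / 2 + 2 * (INR n2 + 1) * PI ->
  0 < lam1 -> 0 < lam2 -> lam1 < lam2 ->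
  exists m1 : R, 0 < m1 /\
    forall (lam : R) (x1 x2 : R -> R),
      lam1 <= lam <= lam2 ->
      in_Theta0 b1 b2 x1 x2 ->
      solves_P a11 a12 a21 a22 b1 b2 tau lam x1 x2 ->
      (exists t, x1 t <> 0 \/ x2 t <> 0) ->
      ~ (Ehat_norm x1 <= m1 /\ Ehat_norm x2 <= m1).
Proof.
  intros Ha11 Ha12 Ha21 Ha22 _ _ _ Hb1 Hb2 _ He1 He2 Hmu1 Hmu2 Ht _ Hn Hi1 Hi2 Hl1 Hl2 Hl12.
  pose proof PI_RGT_0 as Hpi.
  pose proof (eig_char _ _ _ _ _ He1) as Hch1. pose proof (eig_char _ _ _ _ _ He2) as Hch2.
  pose proof (mu_neq mu1 mu2 tau n1 n2 Hn Hi1 Hi2) as Hmu.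
  pose proof (sin_lt_1 _ _ Hi1) as Hs1. pose proof (sin_lt_1 _ _ Hi2) as Hs2.
  set (d := Rmin (dlt mu1 tau lam1) (dlt mu2 tau lam1)).
  assert (Hd : 0 < d) by (apply Rmin_glb_lt; apply dlt_pos; auto).
  set (K := Kc a11 a12 a21 a22 b1 b2 mu1 mu1 mu2 lam2 + Kc a11 a12 a21 a22 b1 b2 mu2 mu1 mu2 lam2).
  assert (HK : 0 <= K) by (unfold K; pose proof (Kc_nonneg a11 a12 a21 a22 b1 b2 mu1 mu1 mu2 lam2);
     pose proof (Kc_nonneg a11 a12 a21 a22 b1 b2 mu2 mu1 mu2 lam2); lra).
  set (kap := sqrt (2 * PI)).
  assert (Hkap : 0 < kap) by (apply sqrt_lt_R0; lra).
  set (q := d / (2 * (K + 1))).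
  assert (Hq : 0 < q) by (unfold q; apply Rdiv_lt_0_compat; lra).
  exists (sqrt q / kap). split. apply Rdiv_lt_0_compat; auto. apply sqrt_lt_R0; auto.
  intros lam x1 x2 Hlam [[C1 [P1 [_ I1]]] [[C2 [P2 [_ I2]]] _]] Hsol [t0 Ht0] [N1 N2].
  set (s := tau / lam).
  set (dx1 := fun t => - lam * (a11 * x1 (t - s) + a12 * x2 (t - s)) * (b1 + x1 t)).
  set (dx2 := fun t => - lam * (a21 * x1 (t - s) + a22 * x2 (t - s)) * (b2 + x2 t)).
  assert (D1 : forall t, is_derive x1 t (dx1 t)) by (intro t; apply (Hsol t)).
  assert (D2 : forall t, is_derive x2 t (dx2 t)) by (intro t; apply (Hsol t)).
  assert (Cd1 : C0 dx1).
  { unfold dx1. apply C0_mult. apply C0_scal. apply C0_plus; apply C0_scal; apply C0_shift; auto.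
    apply C0_plus; auto; apply C0_const. }
  assert (Cd2 : C0 dx2).
  { unfold dx2. apply C0_mult. apply C0_scal. apply C0_plus; apply C0_scal; apply C0_shift; auto.
    apply C0_plus; auto; apply C0_const. }
  set (m := kap * (sqrt q / kap)).
  assert (Hm : forall t, 0 <= t <= 2 * PI -> Rabs (x1 t) <= m /\ Rabs (x2 t) <= m).
  { intros t Htt. split.
    - eapply Rle_trans. apply (sup_bound x1 dx1 D1 Cd1 I1 t Htt). apply Rmult_le_compat_l. lra.
      eapply Rle_trans. apply Ehat_ge; auto. auto.
    - eapply Rle_trans. apply (sup_bound x2 dx2 D2 Cd2 I2 t Htt). apply Rmult_le_compat_l. lra.
      eapply Rle_trans. apply Ehat_ge; auto. auto. }
  assert (HKm : K * m ^ 2 <= d / 2).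
  { unfold m. replace (kap * (sqrt q / kap)) with (sqrt q) by (field; lra).
    rewrite pow2_sqrt by lra. unfold q.
    replace (K * (d / (2 * (K + 1)))) with (d / 2 * (K / (K + 1))) by (field; lra).
    rewrite <- (Rmult_1_r (d / 2)) at 2. apply Rmult_le_compat_l. lra.
    apply Rmult_le_reg_r with (K + 1). lra. unfold Rdiv. rewrite Rmult_assoc, Rinv_l by lra. lra. }
  assert (C1' : C0 x1) by exact C1. assert (C2' : C0 x2) by exact C2.
  pose proof (sol_zero a11 a12 a21 a22 b1 b2 mu1 mu2 tau lam1 lam2 lam m x1 x2 Hb1 Ha12 Hch1 Hch2 Hmu Hmu1 Hmu2 Ht Hs1 Hs2 Hl1
    (conj (proj1 Hlam) (proj2 Hlam)) C1' C2' P1 P2 Hsol Hm HKm) as Z.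
  destruct (reduce t0) as [t' [k [Ht' E]]].
  destruct (Z t' Ht') as [Z1 Z2].
  assert (x1 t0 = x1 t') by (rewrite E; apply per_Z; auto).
  assert (x2 t0 = x2 t') by (rewrite E; apply per_Z; auto).
  destruct Ht0; congruence. Qed.
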